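(* Let $E$ be a real normed space ordered by a proper closed cone $C$, and assume at least one of: (1) $C$ has nonempty interior; (2) $E$ is complete; (3) $C$ is a distance set (for every $x\in E$ there is $y\in C$ with $\|x-y\|=\operatorname{dist}(x,C)$). Let $0<T\leq\infty$, $I=[0,T)$, $U\subset E$ open and convex, and $f\colon I\times U\to E$ a continuous locally Lipschitz map such that $f(t,\cdot)$ is quasi-monotone increasing and convex on $U$ for all $t\in I$. Let $0<t_0\leq T$ and let $x_1,x_2,x_3\colon[0,t_0)\to U$ be differentiable maps with $\dot x_i(t)=f(t,x_i(t))$ for $i=1,2,3$ and $x_3(0)=\lambda x_1(0)+(1-\lambda)x_2(0)$ for some $\lambda\in[0,1]$. Then $x_3(t)\leq\lambda x_1(t)+(1-\lambda)x_2(t)$ for all $t\in[0,t_0)$.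
   Context: A cone $C$ ($\lambda C\subset C$ for $\lambda>0$) is proper if $C+C\subset C$ and $C\cap(-C)=\{0\}$; it induces the partial order $x\leq y$ iff $y-x\in C$. $C^*=\{l\in E^*: l(x)\geq0\ \forall x\in C\}$, where $E^*$ is the (continuous) dual. A map $g\colon D\to E$ is quasi-monotone increasing if for all $x,y\in D$, $l\in C^*$: $x\leq y$, $l(x)=l(y)$ imply $l(g(x))\leq l(g(y))$. A map $g$ is convex if its domain is convex and $g(\lambda x+(1-\lambda)y)\leq\lambda g(x)+(1-\lambda)g(y)$ for $\lambda\in[0,1]$. $f$ is locally Lipschitz if for every compact $K\subset U$ and every $t\in I$, $\sup_{0\leq\tau\leq t,\,x_1\neq x_2\in K}\|f(\tau,x_2)-f(\tau,x_1)\|/\|x_2-x_1\|<\infty$. *)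

(* Defs.v *)
From Stdlib Require Import Reals List.
Open Scope R_scope.

Record NormedSpace (E : Type) := {
  vadd : E -> E -> E;
  vzero : E;
  vopp : E -> E;
  vscal : R -> E -> E;
  vnorm : E -> R;
  vadd_assoc : forall x y z, vadd x (vadd y z) = vadd (vadd x y) z;
  vadd_comm : forall x y, vadd x y = vadd y x;
  vadd_0 : forall x, vadd x vzero = x;
  vadd_opp : forall x, vadd x (vopp x) = vzero;
  vscal_assoc : forall a b x, vscal a (vscal b x) = vscal (a * b) x;
  vscal_1 : forall x, vscal 1 x = x;
  vscal_distr_v : forall a x y, vscal a (vadd x y) = vadd (vscal a x) (vscal a y);
  vscal_distr_s : forall a b x, vscal (a + b) x = vadd (vscal a x) (vscal b x);
  vnorm_eq0 : forall x, vnorm x = 0 -> x = vzero;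
  vnorm_scal : forall a x, vnorm (vscal a x) = Rabs a * vnorm x;
  vnorm_triangle : forall x y, vnorm (vadd x y) <= vnorm x + vnorm y
}.

Arguments vadd {E} _ _ _.
Arguments vzero {E} _.
Arguments vopp {E} _ _.
Arguments vscal {E} _ _ _.
Arguments vnorm {E} _ _.

Section NS.
Context {E : Type} (N : NormedSpace E).

Definition vsub (x y : E) : E := vadd N x (vopp N y).
Definition vdist (x y : E) : R := vnorm N (vsub x y).

Definition is_open (S : E -> Prop) : Prop :=
  forall x, S x -> exists r, 0 < r /\ forall y, vdist y x < r -> S y.
Definition is_closed (S : E -> Prop) : Prop := is_open (fun x => ~ S x).

Definition is_compact (K : E -> Prop) : Prop :=
  forall (Idx : Type) (O : Idx -> E -> Prop),
    (forall i, is_open (O i)) ->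
    (forall x, K x -> exists i, O i x) ->
    exists l : list Idx, forall x, K x -> exists i, In i l /\ O i x.

Definition is_convex_set (S : E -> Prop) : Prop :=
  forall x y lam, S x -> S y -> 0 <= lam <= 1 ->
    S (vadd N (vscal N lam x) (vscal N (1 - lam) y)).

Definition is_cone (C : E -> Prop) : Prop :=
  forall x lam, C x -> 0 < lam -> C (vscal N lam x).
Definition is_proper_cone (C : E -> Prop) : Prop :=
  is_cone C /\
  (forall x y, C x -> C y -> C (vadd N x y)) /\
  (forall x, (C x /\ C (vopp N x)) <-> x = vzero N).

Definition cle (C : E -> Prop) (x y : E) : Prop := C (vsub y x).

Definition has_nonempty_interior (S : E -> Prop) : Prop :=
  exists x r, 0 < r /\ forall y, vdist y x < r -> S y.

Definition is_complete : Prop :=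
  forall u : nat -> E,
    (forall eps, 0 < eps -> exists M, forall n m, (M <= n)%nat -> (M <= m)%nat ->
        vdist (u n) (u m) < eps) ->
    exists l, forall eps, 0 < eps -> exists M, forall n, (M <= n)%nat ->
        vdist (u n) l < eps.

Definition is_distance_set (C : E -> Prop) : Prop :=
  forall x, exists y, C y /\ forall z, C z -> vdist x y <= vdist x z.

Definition is_linear_functional (l : E -> R) : Prop :=
  (forall x y, l (vadd N x y) = l x + l y) /\
  (forall a x, l (vscal N a x) = a * l x).
Definition is_continuous_functional (l : E -> R) : Prop :=
  forall x eps, 0 < eps -> exists delta, 0 < delta /\
    forall y, vdist y x < delta -> Rabs (l y - l x) < eps.
Definition in_dual_cone (C : E -> Prop) (l : E -> R) : Prop :=
  is_linear_functional l /\ is_continuous_functional l /\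
  forall x, C x -> 0 <= l x.

Definition quasi_monotone_increasing (C : E -> Prop) (D : E -> Prop)
  (g : E -> E) : Prop :=
  forall x y l, D x -> D y -> in_dual_cone C l ->
    cle C x y -> l x = l y -> l (g x) <= l (g y).

Definition convex_map (C : E -> Prop) (D : E -> Prop) (g : E -> E) : Prop :=
  is_convex_set D /\
  forall x y lam, D x -> D y -> 0 <= lam <= 1 ->
    cle C (g (vadd N (vscal N lam x) (vscal N (1 - lam) y)))
          (vadd N (vscal N lam (g x)) (vscal N (1 - lam) (g y))).

Definition has_derivative_within (D : R -> Prop) (x : R -> E) (t : R) (v : E)
  : Prop :=
  forall eps, 0 < eps -> exists delta, 0 < delta /\
    forall s, D s -> s <> t -> Rabs (s - t) < delta ->
      vdist (vscal N (/ (s - t)) (vsub (x s) (x t))) v < eps.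

End NS.

(* extended positive reals: None stands for +infinity *)
Definition ext_pos (T : option R) : Prop :=
  match T with Some a => 0 < a | None => True end.
Definition ext_le (a b : option R) : Prop :=
  match a, b with
  | _, None => True
  | None, Some _ => False
  | Some a, Some b => a <= b
  end.
Definition in_Ico0 (T : option R) (t : R) : Prop :=
  0 <= t /\ match T with Some a => t < a | None => True end.

Section F.
Context {E : Type} (N : NormedSpace E).

Definition continuous_on_IxU (I : R -> Prop) (U : E -> Prop)
  (f : R -> E -> E) : Prop :=
  forall t x, I t -> U x -> forall eps, 0 < eps -> exists delta, 0 < delta /\
    forall s y, I s -> U y -> Rabs (s - t) < delta -> vdist N y x < delta ->
      vdist N (f s y) (f t x) < eps.

Definition locally_lipschitz (I : R -> Prop) (U : E -> Prop)
  (f : R -> E -> E) : Prop :=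
  forall K : E -> Prop, is_compact N K -> (forall x, K x -> U x) ->
  forall t, I t -> exists L, forall tau x1 x2, 0 <= tau <= t ->
    K x1 -> K x2 -> x1 <> x2 ->
    vnorm N (vsub N (f tau x2) (f tau x1)) / vnorm N (vsub N x2 x1) <= L.
End F.

(* Main.v *)
Require Import Defs.
From Stdlib Require Import Reals List.
From Stdlib Require Import Lra Lia Classical ClassicalEpsilon FunctionalExtensionality PropExtensionality.
Open Scope R_scope.

Arguments vadd_assoc {E} _ _ _ _.
Arguments vadd_comm {E} _ _ _.
Arguments vadd_0 {E} _ _.
Arguments vadd_opp {E} _ _.
Arguments vscal_assoc {E} _ _ _ _.
Arguments vscal_1 {E} _ _.
Arguments vscal_distr_v {E} _ _ _ _.
Arguments vscal_distr_s {E} _ _ _ _.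
Arguments vnorm_eq0 {E} _ _ _.
Arguments vnorm_scal {E} _ _ _.
Arguments vnorm_triangle {E} _ _ _.

Section VA.
Context {E : Type} (N : NormedSpace E).

Inductive vexp : Type :=
| VAtom (n : nat) | VZero | VAdd (a b : vexp) | VOpp (a : vexp) | VScal (r : R) (a : vexp).

Fixpoint veval (l : list E) (e : vexp) : E :=
  match e with
  | VAtom n => nth n l (vzero N)
  | VZero => vzero N
  | VAdd a b => vadd N (veval l a) (veval l b)
  | VOpp a => vopp N (veval l a)
  | VScal r a => vscal N r (veval l a)
  end.

Fixpoint vcoef (e : vexp) (i : nat) : R :=
  match e with
  | VAtom n => if Nat.eqb n i then 1 else 0
  | VZero => 0
  | VAdd a b => vcoef a i + vcoef b i
  | VOpp a => - vcoef a i
  | VScal r a => r * vcoef a i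
  end.

Lemma v_cancel x y : vadd N x y = x -> y = vzero N.
Proof.
  intro H. assert (H2 : vadd N (vopp N x) (vadd N x y) = vadd N (vopp N x) x) by now rewrite H.
  rewrite vadd_assoc, (vadd_comm N (vopp N x) x), vadd_opp in H2.
  rewrite (vadd_comm N (vzero N) y), vadd_0 in H2. exact H2.
Qed.

Lemma vadd_0l x : vadd N (vzero N) x = x.
Proof. rewrite vadd_comm; apply vadd_0. Qed.

Lemma vscal_0 x : vscal N 0 x = vzero N.
Proof. apply (v_cancel (vscal N 0 x)). rewrite <- vscal_distr_s. f_equal; ring. Qed.

Lemma vscal_0v a : vscal N a (vzero N) = vzero N.
Proof. apply (v_cancel (vscal N a (vzero N))). rewrite <- vscal_distr_v. rewrite vadd_0. auto. Qed.

Lemma vopp_unique x y : vadd N x y = vzero N -> y = vopp N x.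
Proof.
  intro H. assert (H2 : vadd N (vopp N x) (vadd N x y) = vadd N (vopp N x) (vzero N)) by now rewrite H.
  rewrite vadd_assoc, (vadd_comm N (vopp N x) x), vadd_opp, vadd_0l, vadd_0 in H2. exact H2.
Qed.

Lemma vopp_scal x : vopp N x = vscal N (-1) x.
Proof.
  symmetry; apply vopp_unique. rewrite <- (vscal_1 N x) at 1. rewrite <- vscal_distr_s.
  replace (1 + -1) with 0 by ring. apply vscal_0.
Qed.

Fixpoint vlc (l : list E) (c : nat -> R) : E :=
  match l with
  | nil => vzero N
  | v :: l' => vadd N (vscal N (c O) v) (vlc l' (fun i => c (S i)))
  end.

Lemma vlc_ext l c c' : (forall i, (i < length l)%nat -> c i = c' i) -> vlc l c = vlc l c'.
Proof.
  revert c c'; induction l as [|v l IH]; intros c c' H; simpl; auto.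
  rewrite (H O) by (simpl; lia). f_equal. apply IH. intros i Hi. apply H. simpl; lia.
Qed.

Lemma vlc_add l c c' : vlc l (fun i => c i + c' i) = vadd N (vlc l c) (vlc l c').
Proof.
  revert c c'; induction l as [|v l IH]; intros c c'; simpl.
  - rewrite vadd_0; auto.
  - rewrite IH, vscal_distr_s.
    rewrite <- !vadd_assoc. f_equal. rewrite !vadd_assoc. f_equal. apply vadd_comm.
Qed.

Lemma vlc_scal l r c : vlc l (fun i => r * c i) = vscal N r (vlc l c).
Proof.
  revert c; induction l as [|v l IH]; intros c; simpl.
  - rewrite vscal_0v; auto.
  - rewrite IH, vscal_distr_v, vscal_assoc. auto.
Qed.

Lemma vlc_zero l : vlc l (fun _ => 0) = vzero N.
Proof. induction l; simpl; auto. rewrite IHl, vscal_0, vadd_0; auto. Qed.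

Lemma vlc_atom l n : vlc l (fun i => if Nat.eqb n i then 1 else 0) = nth n l (vzero N).
Proof.
  revert n; induction l as [|v l IH]; intros n; simpl.
  - destruct n; auto.
  - destruct n as [|n]; simpl.
    + rewrite vscal_1. rewrite vlc_zero, vadd_0. auto.
    + rewrite vscal_0, vadd_0l. apply IH.
Qed.

Lemma veval_lc l e : veval l e = vlc l (vcoef e).
Proof.
  induction e; simpl.
  - rewrite vlc_atom; auto.
  - rewrite vlc_zero; auto.
  - rewrite IHe1, IHe2, <- vlc_add; auto.
  - rewrite IHe, vopp_scal, <- vlc_scal. apply vlc_ext; intros; ring.
  - rewrite IHe, <- vlc_scal; auto.
Qed.

Fixpoint coefs_eq (k : nat) (e1 e2 : vexp) : Prop :=
  match k with O => True | S k => coefs_eq k e1 e2 /\ vcoef e1 k = vcoef e2 k end.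

Lemma coefs_eq_spec k e1 e2 : coefs_eq k e1 e2 -> forall i, (i < k)%nat -> vcoef e1 i = vcoef e2 i.
Proof.
  induction k; simpl; intros H i Hi. lia. destruct H as [H1 H2].
  destruct (Nat.eq_dec i k). subst; auto. apply IHk; auto; lia.
Qed.

Lemma vexp_sound l e1 e2 : coefs_eq (length l) e1 e2 -> veval l e1 = veval l e2.
Proof.
  intro H. rewrite !veval_lc. apply vlc_ext. apply coefs_eq_spec; auto.
Qed.

End VA.

Ltac find_idx x l :=
  match l with
  | x :: _ => constr:(O)
  | _ :: ?t => let n := find_idx x t in constr:(S n)
  end.

Ltac vreify N l t :=
  lazymatch t with
  | vadd N ?a ?b => let ra := vreify N l a in let rb := vreify N l b in constr:(VAdd ra rb)
  | vsub N ?a ?b => let ra := vreify N l a in let rb := vreify N l b in constr:(VAdd ra (VOpp rb))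
  | vopp N ?a => let ra := vreify N l a in constr:(VOpp ra)
  | vscal N ?r ?a => let ra := vreify N l a in constr:(VScal r ra)
  | vzero N => constr:(VZero)
  | _ => let n := find_idx t l in constr:(VAtom n)
  end.

Ltac vec_eq_gen N l tac :=
  lazymatch goal with
  | |- ?lhs = ?rhs =>
    let a := vreify N l lhs in let b := vreify N l rhs in
    change (veval N l a = veval N l b); apply vexp_sound; simpl; repeat split; tac
  end.
Tactic Notation "vec_eq" constr(N) constr(l) := vec_eq_gen N l ltac:(ring).
Tactic Notation "vec_eq" constr(N) constr(l) "by" tactic(t) := vec_eq_gen N l t.



Lemma Rabs_m1 : Rabs (-1) = 1.
Proof. rewrite Rabs_left; lra. Qed.

Section Norm.
Context {E : Type} (N : NormedSpace E).

Lemma vnorm_0 : vnorm N (vzero N) = 0.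
Proof. rewrite <- (vscal_0 N (vzero N)), vnorm_scal, Rabs_R0; ring. Qed.

Lemma vnorm_nonneg x : 0 <= vnorm N x.
Proof.
  assert (H := vnorm_triangle N x (vopp N x)). rewrite vadd_opp, vnorm_0 in H.
  rewrite vopp_scal, vnorm_scal in H. rewrite Rabs_m1 in H. lra.
Qed.

Lemma vnorm_opp x : vnorm N (vopp N x) = vnorm N x.
Proof. rewrite vopp_scal, vnorm_scal, Rabs_m1; ring. Qed.

Lemma vdist_sym x y : vdist N x y = vdist N y x.
Proof. unfold vdist. rewrite <- vnorm_opp. f_equal. vec_eq N (x :: y :: nil). Qed.

Lemma vdist_tri x y z : vdist N x z <= vdist N x y + vdist N y z.
Proof.
  unfold vdist. replace (vsub N x z) with (vadd N (vsub N x y) (vsub N y z)) by vec_eq N (x::y::z::nil).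
  apply vnorm_triangle.
Qed.

Lemma vdist_nonneg x y : 0 <= vdist N x y.
Proof. apply vnorm_nonneg. Qed.

Lemma vdist_refl x : vdist N x x = 0.
Proof. unfold vdist. replace (vsub N x x) with (vzero N) by vec_eq N (x::nil). apply vnorm_0. Qed.

Lemma vdist_eq0 x y : vdist N x y = 0 -> x = y.
Proof.
  unfold vdist; intro H. apply vnorm_eq0 in H.
  replace x with (vadd N (vsub N x y) y) by vec_eq N (x::y::nil). rewrite H. apply vadd_0l.
Qed.

Lemma vnorm_sub_le x y : Rabs (vnorm N x - vnorm N y) <= vnorm N (vsub N x y).
Proof.
  apply Rabs_le. split.
  - assert (H := vnorm_triangle N (vsub N y x) x).
    replace (vadd N (vsub N y x) x) with y in H by vec_eq N (x::y::nil).
    assert (vnorm N (vsub N y x) = vnorm N (vsub N x y)) by (apply vdist_sym). lra.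
  - assert (H := vnorm_triangle N (vsub N x y) y).
    replace (vadd N (vsub N x y) y) with x in H by vec_eq N (x::y::nil). lra.
Qed.

Lemma vnorm_add_le x y : vnorm N (vadd N x y) <= vnorm N x + vnorm N y.
Proof. apply vnorm_triangle. Qed.

End Norm.

Lemma set_ext {T} (A B : T -> Prop) : (forall t, A t <-> B t) -> A = B.
Proof. intro H. apply functional_extensionality; intro t. apply propositional_extensionality; auto. Qed.

Section Zorn.
Variable T : Type.
Variable le : T -> T -> Prop.
Hypothesis le_refl : forall x, le x x.
Hypothesis le_trans : forall x y z, le x y -> le y z -> le x z.
Definition chain (c : T -> Prop) := forall a b, c a -> c b -> le a b \/ le b a.
Hypothesis ub : forall c, chain c -> exists u, forall a, c a -> le a u.

Let sub (A B : T -> Prop) := forall t, A t -> B t.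
Let Union (F : (T -> Prop) -> Prop) : T -> Prop := fun t => exists S, F S /\ S t.
Let schain (F : (T -> Prop) -> Prop) := forall A B, F A -> F B -> sub A B \/ sub B A.

Theorem zorn : exists m, forall x, le m x -> le x m.
Proof.
  apply NNPP; intro Hno.
  assert (Hs : forall m, exists x, le m x /\ ~ le x m).
  { intro m. apply NNPP; intro H1. apply Hno. exists m. intros x Hx.
    apply NNPP; intro H2. apply H1. exists x; auto. }
  assert (inh : inhabited T).
  { destruct (ub (fun _ => False)) as [u _]. intros a b Ha; destruct Ha. exact (inhabits u). }
  set (g := fun c : T -> Prop => epsilon inh (fun x => forall a, c a -> le a x /\ ~ le x a)).
  assert (Hg : forall c, chain c -> forall a, c a -> le a (g c) /\ ~ le (g c) a).
  { intros c Hc. unfold g. apply (epsilon_spec inh (fun x => forall a, c a -> le a x /\ ~ le x a)).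
    destruct (ub c Hc) as [u Hu]. destruct (Hs u) as [x [H1 H2]]. exists x. intros a Ha.
    split. eapply le_trans; eauto. intro H3. apply H2. eapply le_trans; eauto. }
  set (f := fun S : T -> Prop => fun t => S t \/ t = g S).
  assert (subf : forall S, sub S (f S)) by (intros S t Ht; left; auto).
  set (adm := fun M : (T -> Prop) -> Prop =>
    M (fun _ => False) /\ (forall S, M S -> M (f S)) /\
    (forall F, (forall S, F S -> M S) -> schain F -> M (Union F))).
  set (W := fun S => forall M, adm M -> M S).
  assert (Wadm : adm W).
  { split; [|split].
    - intros M HM; apply HM.
    - intros S HS M HM. apply HM. apply HS; auto.
    - intros F HF Hch M HM. apply HM; auto. intros S HS. apply HF; auto. }
  destruct Wadm as [W0 [Wf WU]].
  assert (Wind : forall M : (T -> Prop) -> Prop, adm (fun S => W S /\ M S) -> forall S, W S -> M S).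
  { intros M HM S HS. apply (HS _ HM). }
  set (extreme := fun x => W x /\ forall y, W y -> sub y x -> ~ sub x y -> sub (f y) x).
  assert (L1 : forall x, extreme x -> forall y, W y -> sub y x \/ sub (f x) y).
  { intros x [Wx Ex]. apply (Wind (fun y => sub y x \/ sub (f x) y)).
    split; [|split].
    - split; auto. left; intros t [].
    - intros S [WS [HS|HS]]; split; auto.
      + destruct (classic (sub x S)) as [Hxs|Hxs].
        * assert (x = S) by (apply set_ext; intro t; split; auto). subst. right; intros t Ht; exact Ht.
        * left. apply Ex; auto.
      + right. intros t Ht. apply subf, HS, Ht.
    - intros F HF Hch. split. apply WU; auto. intros S HS; apply HF; auto.
      destruct (classic (forall S, F S -> sub S x)) as [Hall|Hall].
      + left. intros t [S [HS Ht]]. apply (Hall S HS t Ht).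
      + right. apply not_all_ex_not in Hall. destruct Hall as [S HS].
        apply imply_to_and in HS. destruct HS as [HS1 HS2].
        destruct (HF S HS1) as [_ [H|H]]. contradiction. intros t Ht. exists S; split; auto. }
  assert (L2 : forall x, W x -> extreme x).
  { apply (Wind extreme). split; [|split].
    - split; auto. split; auto. intros y Wy Hy Hn. exfalso. apply Hn. intros t [].
    - intros x [Wx Hx]. split; auto. split; auto. intros y Wy Hy Hn.
      destruct (L1 x Hx y Wy) as [Hyx|Hfy]; [|contradiction].
      destruct (classic (sub x y)) as [Hxy|Hxy].
      + assert (x = y) by (apply set_ext; intro t; split; auto). subst. intros t Ht; exact Ht.
      + destruct Hx as [_ Hx]. intros t Ht. apply subf. apply (Hx y Wy Hyx Hxy t Ht).
    - intros F HF Hch. assert (Wm : W (Union F)) by (apply WU; auto; intros S HS; apply HF; auto).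
      split; auto. split; auto. intros y Wy Hy Hn.
      destruct (classic (exists S, F S /\ ~ sub (f S) y)) as [[S [HS HSn]]|Hno2].
      + destruct (HF S HS) as [WS ES].
        destruct (L1 S ES y Wy) as [HyS|HfS]; [|contradiction].
        destruct (classic (sub S y)) as [HSy|HSy].
        * assert (S = y) by (apply set_ext; intro t; split; auto). subst.
          destruct (L1 y ES (Union F) Wm) as [Hm|Hm]. contradiction. exact Hm.
        * destruct ES as [_ ES]. intros t Ht. exists S. split; auto. apply (ES y Wy HyS HSy t Ht).
      + exfalso. apply Hn. intros t [S [HS Ht]].
        destruct (classic (sub (f S) y)) as [H|H]. apply H, subf, Ht. exfalso; apply Hno2; eauto. }
  assert (Wch : schain W).
  { intros A B WA WB. destruct (L1 A (L2 A WA) B WB) as [H|H]. right; auto. left. intros t Ht; apply H, subf, Ht. }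
  assert (Wc : forall S, W S -> chain S).
  { apply (Wind chain). split; [|split].
    - split; auto. intros a b [].
    - intros S [WS HS]. split; auto. intros a b [Ha|Ha] [Hb|Hb].
      + apply HS; auto.
      + subst. left. apply (Hg S HS a Ha).
      + subst. right. apply (Hg S HS b Hb).
      + subst. left. apply le_refl.
    - intros F HF Hch. split. apply WU; auto. intros S HS; apply HF; auto.
      intros a b [A [HA Ha]] [B [HB Hb]]. destruct (Hch A B HA HB) as [H|H].
      + apply (proj2 (HF B HB)); auto.
      + apply (proj2 (HF A HA)); auto. }
  set (m := Union W).
  assert (Wm : W m) by (apply WU; auto).
  assert (Hfm : m (g m)). { exists (f m). split. apply Wf; auto. right; auto. }
  destruct (Hg m (Wc m Wm) (g m) Hfm) as [_ H]. apply H, le_refl.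
Qed.
End Zorn.

Section HB.
Context {E : Type} (N : NormedSpace E) (p : E -> R).
Hypothesis p_sub : forall x y, p (vadd N x y) <= p x + p y.
Hypothesis p_hom : forall a x, 0 < a -> p (vscal N a x) = a * p x.
Variable x0 : E.

Lemma p_0 : p (vzero N) = 0.
Proof.
  assert (H := p_hom 2 (vzero N) ltac:(lra)). rewrite vscal_0v in H. lra.
Qed.

Lemma p_neg_le a x : a * p x <= p (vscal N a x).
Proof.
  destruct (Rlt_or_le 0 a) as [Ha|Ha]. rewrite p_hom; lra.
  destruct (Req_dec a 0) as [H0|H0].
  - subst. rewrite vscal_0, p_0. lra.
  - assert (H := p_sub (vscal N a x) (vscal N (-a) x)).
    replace (vadd N (vscal N a x) (vscal N (- a) x)) with (vzero N) in H by vec_eq N (x::nil).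
    assert (a < 0) by (destruct (Rtotal_order a 0) as [?|[?|?]]; lra).
    rewrite p_0, (p_hom (-a)) in H by lra. nra.
Qed.

Record PE := mkPE {
  pS : E -> Prop; pg : E -> R;
  pS0 : pS (vzero N);
  pSadd : forall x y, pS x -> pS y -> pS (vadd N x y);
  pSscal : forall a x, pS x -> pS (vscal N a x);
  pgadd : forall x y, pS x -> pS y -> pg (vadd N x y) = pg x + pg y;
  pgscal : forall a x, pS x -> pg (vscal N a x) = a * pg x;
  pgle : forall x, pS x -> pg x <= p x;
  px0 : pS x0;
  pgx0 : pg x0 = p x0 }.

Definition PEle (e1 e2 : PE) := (forall x, pS e1 x -> pS e2 x) /\ (forall x, pS e1 x -> pg e1 x = pg e2 x).

Lemma PEle_refl e : PEle e e.
Proof. split; auto. Qed.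
Lemma PEle_trans e1 e2 e3 : PEle e1 e2 -> PEle e2 e3 -> PEle e1 e3.
Proof. intros [A B] [C D]. split; auto. intros x Hx. rewrite B, D; auto. Qed.

Let inhR : inhabited R := inhabits 0.
Let S0 := fun x => exists t, x = vscal N t x0.
Let g0 := fun x => epsilon inhR (fun t => x = vscal N t x0) * p x0.

Lemma scal_x0_uniq t t' : vscal N t x0 = vscal N t' x0 -> t * p x0 = t' * p x0.
Proof.
  intro H. destruct (Req_dec t t') as [->|Hne]; auto.
  assert (x0 = vzero N).
  { replace x0 with (vscal N (/ (t - t')) (vsub N (vscal N t x0) (vscal N t' x0))).
    rewrite H. replace (vsub N (vscal N t' x0) (vscal N t' x0)) with (vzero N) by vec_eq N (x0::nil).
    apply vscal_0v. vec_eq N (x0::nil) by (field; lra). }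
  rewrite H0, p_0. ring.
Qed.

Lemma g0_spec t : g0 (vscal N t x0) = t * p x0.
Proof.
  unfold g0. set (P := fun t' => vscal N t x0 = vscal N t' x0).
  assert (HP : P (epsilon inhR P)) by (apply epsilon_spec; exists t; reflexivity).
  symmetry. apply scal_x0_uniq. exact HP.
Qed.

Definition b0 : PE.
Proof.
  refine (mkPE S0 g0 _ _ _ _ _ _ _ _).
  - exists 0. symmetry; apply vscal_0.
  - intros x y [t ->] [s ->]. exists (t + s). vec_eq N (x0::nil).
  - intros a x [t ->]. exists (a * t). vec_eq N (x0::nil).
  - intros x y [t ->] [s ->]. replace (vadd N (vscal N t x0) (vscal N s x0)) with (vscal N (t+s) x0) by vec_eq N (x0::nil).
    rewrite !g0_spec. ring.
  - intros a x [t ->]. replace (vscal N a (vscal N t x0)) with (vscal N (a*t) x0) by vec_eq N (x0::nil).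
    rewrite !g0_spec. ring.
  - intros x [t ->]. rewrite g0_spec. apply p_neg_le.
  - exists 1. symmetry; apply vscal_1.
  - replace x0 with (vscal N 1 x0) at 1 by apply vscal_1. rewrite g0_spec. ring.
Defined.

Lemma b0_le e : PEle b0 e.
Proof.
  split.
  - intros x [t ->]. apply pSscal, px0.
  - intros x [t ->]. simpl. rewrite g0_spec, pgscal, pgx0; auto. apply px0.
Qed.

Let inhPE : inhabited PE := inhabits b0.

Lemma PE_chain_ub (c : PE -> Prop) : chain PE PEle c -> exists u, forall a, c a -> PEle a u.
Proof.
  intro Hc.
  set (c' := fun e => c e \/ e = b0).
  assert (Hc' : chain PE PEle c').
  { intros a b [Ha| ->] [Hb| ->]; auto. right; apply b0_le. left; apply b0_le. left; apply PEle_refl. }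
  set (Su := fun x => exists e, c' e /\ pS e x).
  set (gu := fun x => pg (epsilon inhPE (fun e => c' e /\ pS e x)) x).
  assert (gu_spec : forall e x, c' e -> pS e x -> gu x = pg e x).
  { intros e x He Hx. unfold gu. set (P := fun e => c' e /\ pS e x).
    assert (HP : P (epsilon inhPE P)) by (apply epsilon_spec; exists e; split; auto).
    destruct HP as [H1 H2]. destruct (Hc' _ _ H1 He) as [[A B]|[A B]].
    - apply B; auto.
    - symmetry; apply B; auto. }
  assert (two : forall x y, Su x -> Su y -> exists e, c' e /\ pS e x /\ pS e y).
  { intros x y [e1 [H1 Hx]] [e2 [H2 Hy]]. destruct (Hc' _ _ H1 H2) as [[A _]|[A _]].
    exists e2; auto. exists e1; auto. }
  unshelve eexists (mkPE Su gu _ _ _ _ _ _ _ _).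
  - exists b0. split. right; auto. apply pS0.
  - intros x y Hx Hy. destruct (two x y Hx Hy) as [e [He [A B]]]. exists e. split; auto. apply pSadd; auto.
  - intros a x [e [He Hx]]. exists e. split; auto. apply pSscal; auto.
  - intros x y Hx Hy. destruct (two x y Hx Hy) as [e [He [A B]]].
    rewrite !(gu_spec e); auto. apply pgadd; auto. apply pSadd; auto.
  - intros a x [e [He Hx]]. rewrite !(gu_spec e); auto. apply pgscal; auto. apply pSscal; auto.
  - intros x [e [He Hx]]. rewrite (gu_spec e); auto. apply pgle; auto.
  - exists b0. split. right; auto. apply px0.
  - rewrite (gu_spec b0). apply pgx0. right; auto. apply px0.
  - intros a Ha. split.
    + intros x Hx. exists a. split; auto. left; auto.
    + intros x Hx. simpl. symmetry. apply gu_spec; auto. left; auto.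
Qed.

Lemma PE_extend (e : PE) z : ~ pS e z -> exists e', PEle e e' /\ pS e' z.
Proof.
  intro Hz.
  set (A := fun r => exists x, pS e x /\ r = pg e x - p (vsub N x z)).
  assert (key : forall x y, pS e x -> pS e y -> pg e x - p (vsub N x z) <= p (vadd N y z) - pg e y).
  { intros x y Hx Hy. assert (H1 := pgadd e x y Hx Hy). assert (H2 := pgle e _ (pSadd e x y Hx Hy)).
    assert (H3 := p_sub (vsub N x z) (vadd N y z)).
    replace (vadd N (vsub N x z) (vadd N y z)) with (vadd N x y) in H3 by vec_eq N (x::y::z::nil). lra. }
  assert (Hb : bound A).
  { exists (p (vadd N (vzero N) z) - pg e (vzero N)). intros r [x [Hx ->]]. apply key; auto. apply pS0. }
  assert (Hne : exists r, A r) by (exists (pg e (vzero N) - p (vsub N (vzero N) z)); exists (vzero N); split; auto; apply pS0).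
  destruct (completeness A Hb Hne) as [c [Hc1 Hc2]].
  assert (Hlo : forall x, pS e x -> pg e x - p (vsub N x z) <= c) by (intros x Hx; apply Hc1; exists x; auto).
  assert (Hhi : forall y, pS e y -> c <= p (vadd N y z) - pg e y).
  { intros y Hy. apply Hc2. intros r [x [Hx ->]]. apply key; auto. }
  assert (uniq : forall x t x' t', pS e x -> pS e x' -> vadd N x (vscal N t z) = vadd N x' (vscal N t' z) -> x = x' /\ t = t').
  { intros x t x' t' Hx Hx' H. destruct (Req_dec t t') as [<-|Hne'].
    - split; auto. replace x with (vsub N (vadd N x (vscal N t z)) (vscal N t z)) by vec_eq N (x::z::nil).
      rewrite H. vec_eq N (x'::z::nil).
    - exfalso. apply Hz. replace z with (vscal N (/ (t - t')) (vsub N x' x)).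
      apply pSscal. apply pSadd; auto. rewrite vopp_scal. apply pSscal; auto.
      assert (Hd : vsub N x' x = vscal N (t - t') z).
      { replace (vsub N x' x) with (vsub N (vadd N x' (vscal N t' z)) (vadd N x (vscal N t' z))) by vec_eq N (x::x'::z::nil).
        rewrite <- H. vec_eq N (x::z::nil). }
      rewrite Hd. vec_eq N (z::nil) by (field; lra). }
  set (S' := fun w => exists x t, pS e x /\ w = vadd N x (vscal N t z)).
  set (inhXT := inhabits (vzero N, 0)).
  set (g' := fun w => let xt := epsilon inhXT (fun xt => pS e (fst xt) /\ w = vadd N (fst xt) (vscal N (snd xt) z)) in
                      pg e (fst xt) + snd xt * c).
  assert (g'_spec : forall x t, pS e x -> g' (vadd N x (vscal N t z)) = pg e x + t * c).
  { intros x t Hx. unfold g'. set (P := fun xt : E * R => pS e (fst xt) /\ vadd N x (vscal N t z) = vadd N (fst xt) (vscal N (snd xt) z)).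
    assert (HP : P (epsilon inhXT P)) by (apply epsilon_spec; exists (x, t); split; auto).
    destruct HP as [H1 H2]. destruct (uniq _ _ _ _ Hx H1 H2) as [E1 E2]. simpl. rewrite <- E1, <- E2. reflexivity. }
  unshelve eexists (mkPE S' g' _ _ _ _ _ _ _ _).
  - exists (vzero N), 0. split. apply pS0. vec_eq N (z::nil).
  - intros w w' [x [t [Hx ->]]] [x' [t' [Hx' ->]]]. exists (vadd N x x'), (t + t'). split. apply pSadd; auto. vec_eq N (x::x'::z::nil).
  - intros a w [x [t [Hx ->]]]. exists (vscal N a x), (a * t). split. apply pSscal; auto. vec_eq N (x::z::nil).
  - intros w w' [x [t [Hx ->]]] [x' [t' [Hx' ->]]].
    replace (vadd N (vadd N x (vscal N t z)) (vadd N x' (vscal N t' z))) with (vadd N (vadd N x x') (vscal N (t+t') z)) by vec_eq N (x::x'::z::nil).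
    rewrite !g'_spec; auto. rewrite pgadd; auto. ring. apply pSadd; auto.
  - intros a w [x [t [Hx ->]]].
    replace (vscal N a (vadd N x (vscal N t z))) with (vadd N (vscal N a x) (vscal N (a*t) z)) by vec_eq N (x::z::nil).
    rewrite !g'_spec; auto. rewrite pgscal; auto. ring. apply pSscal; auto.
  - intros w [x [t [Hx ->]]]. rewrite g'_spec; auto.
    destruct (Rtotal_order t 0) as [Hn|[H0|Hp]].
    + set (s := - t). assert (Hs : 0 < s) by (unfold s; lra).
      assert (H := Hlo (vscal N (/ s) x) (pSscal e _ _ Hx)). rewrite pgscal in H; auto.
      replace (vadd N x (vscal N t z)) with (vscal N s (vsub N (vscal N (/ s) x) z)) by (unfold s; vec_eq N (x::z::nil) by (field; lra)).
      rewrite p_hom; auto. apply Rmult_le_compat_l with (r := s) in H; [|lra].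
      replace (s * (/ s * pg e x - p (vsub N (vscal N (/ s) x) z))) with (pg e x - s * p (vsub N (vscal N (/ s) x) z)) in H by (field; lra).
      unfold s in *. nra.
    + subst. replace (vadd N x (vscal N 0 z)) with x by vec_eq N (x::z::nil). rewrite Rmult_0_l, Rplus_0_r. apply pgle; auto.
    + assert (H := Hhi (vscal N (/ t) x) (pSscal e _ _ Hx)). rewrite pgscal in H; auto.
      replace (vadd N x (vscal N t z)) with (vscal N t (vadd N (vscal N (/ t) x) z)) by (vec_eq N (x::z::nil) by (field; lra)).
      rewrite p_hom; auto. apply Rmult_le_compat_l with (r := t) in H; [|lra].
      replace (t * (p (vadd N (vscal N (/ t) x) z) - / t * pg e x)) with (t * p (vadd N (vscal N (/ t) x) z) - pg e x) in H by (field; lra).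
      lra.
  - exists x0, 0. split. apply px0. vec_eq N (x0::z::nil).
  - replace x0 with (vadd N x0 (vscal N 0 z)) at 1 by vec_eq N (x0::z::nil). rewrite g'_spec. rewrite pgx0; ring. apply px0.
  - split. split.
    + intros x Hx. exists x, 0. split; auto. vec_eq N (x::z::nil).
    + intros x Hx. simpl. replace x with (vadd N x (vscal N 0 z)) at 2 by vec_eq N (x::z::nil). rewrite g'_spec; auto. ring.
    + exists (vzero N), 1. split. apply pS0. vec_eq N (z::nil).
Qed.

Theorem hahn_banach : exists l : E -> R,
  (forall x y, l (vadd N x y) = l x + l y) /\ (forall a x, l (vscal N a x) = a * l x) /\
  (forall x, l x <= p x) /\ l x0 = p x0.
Proof.
  destruct (zorn PE PEle PEle_refl PEle_trans PE_chain_ub) as [m Hm].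
  assert (All : forall z, pS m z).
  { intro z. apply NNPP; intro Hz. destruct (PE_extend m z Hz) as [e' [H1 H2]].
    apply Hz. apply (proj1 (Hm e' H1)); auto. }
  exists (pg m). split; [|split; [|split]].
  - intros; apply pgadd; auto.
  - intros; apply pgscal; auto.
  - intros; apply pgle; auto.
  - apply pgx0.
Qed.
End HB.

Lemma real_ind (a b : R) (Q : R -> Prop) :
  a <= b -> Q a ->
  (forall s, a <= s < b -> (forall u, a <= u <= s -> Q u) -> exists d, 0 < d /\ forall u, s <= u < s + d -> u <= b -> Q u) ->
  (forall s, a < s <= b -> (forall u, a <= u < s -> Q u) -> Q s) ->
  forall u, a <= u <= b -> Q u.
Proof.
  intros Hab Qa Hstep Hcl.
  set (S := fun s => a <= s <= b /\ forall u, a <= u <= s -> Q u).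
  assert (Hb : bound S) by (exists b; intros s [[_ H] _]; auto).
  assert (Hne : exists s, S s).
  { exists a. split. lra. intros u Hu. replace u with a by lra. auto. }
  destruct (completeness S Hb Hne) as [m [Hm1 Hm2]].
  assert (Ham : a <= m) by (apply Hm1; destruct Hne as [s Hs]; unfold S; split; [lra|]; intros u Hu; replace u with a by lra; auto).
  assert (Hmb : m <= b) by (apply Hm2; intros s [[_ H] _]; auto).
  assert (below : forall u, a <= u < m -> Q u).
  { intros u Hu. apply NNPP; intro Hn.
    assert (m <= u); [|lra]. apply Hm2. intros s [Hs1 Hs2]. destruct (Rle_or_lt s u); auto.
    exfalso. apply Hn, Hs2. lra. }
  assert (Qm : Q m).
  { destruct (Req_dec m a) as [->|Hne']; auto. apply Hcl. lra. auto. }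
  assert (upto : forall u, a <= u <= m -> Q u).
  { intros u Hu. destruct (Req_dec u m) as [->|]; auto. apply below; lra. }
  destruct (Req_dec m b) as [<-|Hmb']; auto.
  exfalso. destruct (Hstep m ltac:(lra) upto) as [d [Hd Hd2]].
  set (s' := Rmin (m + d/2) b).
  assert (S s').
  { unfold s'. split. split. apply Rmin_case; lra. apply Rmin_r.
    intros u Hu. destruct (Rle_or_lt u m). apply upto; lra.
    apply Hd2. split. lra. assert (Rmin (m + d/2) b <= m + d/2) by apply Rmin_l. lra.
    assert (Rmin (m + d/2) b <= b) by apply Rmin_r. lra. }
  assert (s' <= m) by (apply Hm1; auto). unfold s' in H0.
  unfold Rmin in H0. destruct Rle_dec in H0; lra.
Qed.

Definition cont_on (g : R -> R) (a b : R) :=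
  forall s, a <= s <= b -> forall eps, 0 < eps -> exists del, 0 < del /\
    forall u, a <= u <= b -> Rabs (u - s) < del -> Rabs (g u - g s) < eps.

Lemma max_on (g : R -> R) a b : a <= b -> cont_on g a b ->
  exists s1, a <= s1 <= b /\ forall u, a <= u <= b -> g u <= g s1.
Proof.
  intros Hab Hc.
  set (cl := fun u => Rmax a (Rmin b u)).
  assert (Hcl : forall u, a <= cl u <= b) by (intro u; unfold cl; split; [apply Rmax_l|apply Rmax_lub; [lra|apply Rmin_l]]).
  assert (Hcl2 : forall u, a <= u <= b -> cl u = u).
  { intros u Hu. unfold cl. rewrite Rmin_right by lra. rewrite Rmax_right by lra. auto. }
  assert (Hcl3 : forall u s, a <= s <= b -> Rabs (cl u - s) <= Rabs (u - s)).
  { intros u s Hs. unfold cl. unfold Rmax, Rmin. repeat destruct Rle_dec; apply Rabs_le; split;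
    try (apply Rabs_le_between); unfold Rabs; repeat destruct Rcase_abs; lra. }
  destruct (continuity_ab_maj (fun u => g (cl u)) a b Hab) as [s1 [H1 H2]].
  - intros c Hc'. unfold continuity_pt, continue_in, limit1_in, limit_in. simpl. unfold R_dist.
    intros eps Heps. destruct (Hc c Hc' eps Heps) as [del [Hdel Hdel2]].
    exists del. split; auto. intros x [_ Hx]. rewrite (Hcl2 c Hc'). apply Hdel2. apply Hcl.
    eapply Rle_lt_trans. apply Hcl3; auto. auto.
  - exists s1. split; auto. intros u Hu. specialize (H1 u Hu). rewrite Hcl2 in H1 by auto.
    rewrite Hcl2 in H1 by auto. auto.
Qed.

Lemma dini_gronwall (g : R -> R) a b K :
  a < b -> 0 < K -> 2 * K * (b - a) < 1 -> cont_on g a b ->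
  (forall s, a <= s <= b -> 0 <= g s) -> g a = 0 ->
  (forall sg, a < sg <= b -> forall eps, 0 < eps -> exists h0, 0 < h0 /\
     forall h, 0 < h < h0 -> h <= sg - a -> g sg - g (sg - h) <= h * (K * g sg + eps)) ->
  forall s, a <= s <= b -> g s = 0.
Proof.
  intros Hab HK Hsmall Hc Hpos Ha Hdini.
  destruct (max_on g a b ltac:(lra) Hc) as [s1 [Hs1 Hmax]].
  set (Gm := g s1).
  destruct (Rle_or_lt Gm 0) as [HG|HG].
  { intros s Hs. specialize (Hmax s Hs). specialize (Hpos s Hs). unfold Gm in HG. lra. }
  exfalso.
  set (phi := fun s => g s - 2 * K * Gm * (s - a)).
  set (v := phi s1).
  assert (Hv : 0 < v).
  { unfold v, phi. fold Gm. assert (K * Gm * (s1 - a) <= K * Gm * (b - a)).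
    { apply Rmult_le_compat_l. apply Rmult_le_pos; lra. lra. }
    assert (2 * K * (b - a) * Gm < Gm) by nra. nra. }
  assert (Hs1a : a < s1).
  { destruct (Req_dec s1 a) as [E|E]; [|lra]. exfalso. unfold v, phi in Hv. rewrite E, Ha in Hv. lra. }
  assert (Hcphi : cont_on phi a b).
  { intros s Hs eps Heps. destruct (Hc s Hs (eps/2)) as [d1 [Hd1 Hd2]]. lra.
    exists (Rmin d1 (eps / (2 * (2 * K * Gm) + 1))). split.
    apply Rmin_case. lra. apply Rdiv_lt_0_compat; nra.
    intros u Hu Hus. unfold phi.
    assert (Hus1 : Rabs (u - s) < d1) by (eapply Rlt_le_trans; [exact Hus| apply Rmin_l]).
    assert (Hus2 : Rabs (u - s) < eps / (2 * (2 * K * Gm) + 1)) by (eapply Rlt_le_trans; [exact Hus| apply Rmin_r]).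
    specialize (Hd2 u Hu Hus1).
    replace (g u - 2 * K * Gm * (u - a) - (g s - 2 * K * Gm * (s - a))) with ((g u - g s) - 2 * K * Gm * (u - s)) by ring.
    eapply Rle_lt_trans. apply Rabs_triang. rewrite Rabs_Ropp, Rabs_mult.
    rewrite (Rabs_right (2 * K * Gm)) by nra.
    assert (2 * K * Gm * Rabs (u - s) <= eps / 2).
    { assert (HH: 0 < 2 * (2 * K * Gm) + 1) by nra.
      apply Rmult_lt_compat_l with (r := 2 * K * Gm) in Hus2; [|nra].
      assert (2 * K * Gm * (eps / (2 * (2 * K * Gm) + 1)) <= eps / 2).
      { unfold Rdiv. rewrite <- Rmult_assoc. apply Rmult_le_reg_r with (r := 2 * (2 * K * Gm) + 1). lra.
        rewrite Rmult_assoc, Rinv_l by lra. nra. }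
      lra. }
    lra. }
  assert (Hhit : exists s2, a < s2 <= s1 /\ v <= phi s2 /\ forall u, a <= u < s2 -> phi u < v).
  { apply NNPP; intro Hno.
    assert (all : forall u, a <= u <= s1 -> phi u < v).
    { apply real_ind. lra. unfold phi. rewrite Ha. lra.
      - intros s Hs Hall. assert (Hs' : a <= s <= b) by lra.
        destruct (Hcphi s Hs' (v - phi s)) as [d1 [Hd1 Hd2]]. specialize (Hall s ltac:(lra)). lra.
        exists d1. split; auto. intros u Hu Hu2.
        assert (Hu' : a <= u <= b) by lra. specialize (Hd2 u Hu').
        assert (Rabs (u - s) < d1) by (rewrite Rabs_right; lra).
        specialize (Hd2 H). apply Rabs_def2 in Hd2. lra.
      - intros s Hs Hall. apply NNPP; intro Hn. apply Hno. exists s. split. lra. split. lra. auto. }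
    specialize (all s1 ltac:(lra)). unfold v in all. lra. }
  destruct Hhit as [s2 [Hs2 [Hv2 Hbel]]].
  destruct (Hdini s2 ltac:(lra) (K * Gm / 2)) as [h0 [Hh0 Hh0']]. apply Rdiv_lt_0_compat; nra.
  set (h := Rmin (h0 / 2) (s2 - a)).
  assert (Hh : 0 < h < h0) by (unfold h; split; [apply Rmin_case; lra| eapply Rle_lt_trans; [apply Rmin_l|lra]]).
  assert (Hh2 : h <= s2 - a) by apply Rmin_r.
  specialize (Hh0' h Hh Hh2).
  assert (Hgs2 : g s2 <= Gm) by (apply Hmax; lra).
  assert (phi (s2 - h) < v) by (apply Hbel; lra).
  unfold phi in *.
  assert (h * (K * g s2 + K * Gm / 2) <= h * (K * Gm + K * Gm / 2)).
  { apply Rmult_le_compat_l. lra. apply Rplus_le_compat_r. apply Rmult_le_compat_l; lra. }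
  assert (HX: 0 < h * (K*Gm)) by (apply Rmult_lt_0_compat; nra).
  assert (E1: g s2 - 2*K*Gm*(s2-a) - (g (s2-h) - 2*K*Gm*(s2-h-a)) = (g s2 - g (s2-h)) - 2*(h*(K*Gm))) by ring.
  assert (E2: h*(K*Gm + K*Gm/2) = 3/2 * (h*(K*Gm))) by field.
  lra.
Qed.

Lemma Rdiv_le_l a b c : 0 < c -> a <= b * c -> a / c <= b.
Proof.
  intros Hc H. apply Rmult_le_reg_r with c; auto. unfold Rdiv. rewrite Rmult_assoc, Rinv_l by lra. lra.
Qed.

Definition is_glb (A : R -> Prop) (m : R) := (forall r, A r -> m <= r) /\ (forall b, (forall r, A r -> b <= r) -> b <= m).
Definition Rinf (A : R -> Prop) : R := epsilon (inhabits 0) (is_glb A).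

Lemma Rinf_spec A : (exists r, A r) -> (exists b, forall r, A r -> b <= r) -> is_glb A (Rinf A).
Proof.
  intros [r0 Hr0] [b Hb]. unfold Rinf. apply epsilon_spec.
  set (B := fun r => A (- r)).
  assert (HB : bound B) by (exists (-b); intros r Hr; specialize (Hb _ Hr); lra).
  assert (HBn : exists r, B r) by (exists (-r0); unfold B; rewrite Ropp_involutive; auto).
  destruct (completeness B HB HBn) as [m [H1 H2]]. exists (-m). split.
  - intros r Hr. assert (-r <= m) by (apply H1; unfold B; rewrite Ropp_involutive; auto). lra.
  - intros c Hc. assert (m <= -c); [|lra]. apply H2. intros r Hr. specialize (Hc _ Hr). lra.
Qed.

Lemma glb_approx A m : is_glb A m -> forall eps, 0 < eps -> exists r, A r /\ r < m + eps.
Proof.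
  intros [H1 H2] eps Heps. apply NNPP; intro Hn. assert (m + eps <= m); [|lra].
  apply H2. intros r Hr. destruct (Rlt_or_le r (m + eps)); auto. exfalso; apply Hn; eauto.
Qed.

Definition gap_ok {E} (N : NormedSpace E) (C : E -> Prop) (P : E -> R) (M : R) : Prop :=
  0 < M /\ (forall x y, P (vadd N x y) <= P x + P y) /\ (forall a x, 0 < a -> P (vscal N a x) = a * P x) /\
  (forall x, 0 <= P x) /\ (forall x, P x <= M * vnorm N x) /\ (forall c, C c -> P c <= 0) /\
  (forall x, P x <= 0 -> C x) /\
  (forall d eta, 0 < P d -> 0 < eta -> exists q l, C q /\ is_linear_functional N l /\ (forall x, l x <= P x) /\
      l q = 0 /\ P d - eta <= l d /\ vnorm N (vsub N d q) <= M * P d).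

Section Dist.
Context {E : Type} (N : NormedSpace E) (S : E -> Prop).
Hypothesis S0 : S (vzero N).
Hypothesis Sadd : forall x y, S x -> S y -> S (vadd N x y).
Hypothesis Sscal : forall a x, 0 < a -> S x -> S (vscal N a x).

Definition Dist x := Rinf (fun r => exists c, S c /\ r = vdist N x c).

Lemma Dist_glb x : is_glb (fun r => exists c, S c /\ r = vdist N x c) (Dist x).
Proof. apply Rinf_spec. exists (vdist N x (vzero N)); eauto. exists 0. intros r [c [_ ->]]. apply vdist_nonneg. Qed.

Lemma Dist_le x c : S c -> Dist x <= vdist N x c.
Proof. intro Hc. apply (proj1 (Dist_glb x)). eauto. Qed.
Lemma Dist_ge x b : (forall c, S c -> b <= vdist N x c) -> b <= Dist x.
Proof. intro H. apply (proj2 (Dist_glb x)). intros r [c [Hc ->]]. auto. Qed.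
Lemma Dist_nonneg x : 0 <= Dist x.
Proof. apply Dist_ge. intros; apply vdist_nonneg. Qed.
Lemma Dist_approx x eps : 0 < eps -> exists c, S c /\ vdist N x c < Dist x + eps.
Proof. intro He. destruct (glb_approx _ _ (Dist_glb x) eps He) as [r [[c [Hc ->]] H]]. eauto. Qed.
Lemma Dist_bound x : Dist x <= vnorm N x.
Proof. eapply Rle_trans. apply (Dist_le x (vzero N) S0). unfold vdist. right. f_equal. vec_eq N (x::nil). Qed.

Lemma Dist_sub x y : Dist (vadd N x y) <= Dist x + Dist y.
Proof.
  apply Rnot_lt_le; intro H.
  set (e := (Dist (vadd N x y) - Dist x - Dist y) / 3).
  assert (He : 0 < e) by (unfold e; lra).
  destruct (Dist_approx x e He) as [c [Hc Hc2]]. destruct (Dist_approx y e He) as [c' [Hc' Hc2']].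
  assert (Dist (vadd N x y) <= vdist N (vadd N x y) (vadd N c c')) by (apply Dist_le; auto).
  assert (vdist N (vadd N x y) (vadd N c c') <= vdist N x c + vdist N y c').
  { unfold vdist. replace (vsub N (vadd N x y) (vadd N c c')) with (vadd N (vsub N x c) (vsub N y c')) by vec_eq N (x::y::c::c'::nil).
    apply vnorm_triangle. }
  unfold e in *. lra.
Qed.

Lemma Dist_hom_le a x : 0 < a -> Dist (vscal N a x) <= a * Dist x.
Proof.
  intro Ha. assert (Dist (vscal N a x) / a <= Dist x).
  { apply Dist_ge. intros c Hc. apply Rdiv_le_l; auto.
    assert (Dist (vscal N a x) <= vdist N (vscal N a x) (vscal N a c)) by (apply Dist_le; apply Sscal; auto).
    assert (vdist N (vscal N a x) (vscal N a c) = a * vdist N x c).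
    { unfold vdist. replace (vsub N (vscal N a x) (vscal N a c)) with (vscal N a (vsub N x c)) by vec_eq N (x::c::nil).
      rewrite vnorm_scal, Rabs_right; lra. }
    lra. }
  apply Rmult_le_compat_l with (r := a) in H; [|lra].
  replace (a * (Dist (vscal N a x) / a)) with (Dist (vscal N a x)) in H by (field; lra). lra.
Qed.

Lemma Dist_hom a x : 0 < a -> Dist (vscal N a x) = a * Dist x.
Proof.
  intro Ha. apply Rle_antisym. apply Dist_hom_le; auto.
  assert (H := Dist_hom_le (/ a) (vscal N a x) (Rinv_0_lt_compat _ Ha)).
  replace (vscal N (/ a) (vscal N a x)) with x in H by (vec_eq N (x::nil) by (field; lra)).
  apply Rmult_le_compat_l with (r := a) in H; [|lra].
  replace (a * (/ a * Dist (vscal N a x))) with (Dist (vscal N a x)) in H by (field; lra). lra.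
Qed.

End Dist.

Section Cone.
Context {E : Type} (N : NormedSpace E) (C : E -> Prop).
Hypothesis HC : is_proper_cone N C.
Hypothesis HCcl : is_closed N C.

Lemma C0 : C (vzero N).
Proof. destruct HC as [_ [_ H]]. apply (proj2 (H (vzero N))); auto. Qed.
Lemma Cadd x y : C x -> C y -> C (vadd N x y).
Proof. destruct HC as [_ [H _]]; auto. Qed.
Lemma Cscal a x : 0 < a -> C x -> C (vscal N a x).
Proof. destruct HC as [H _]; intros; apply H; auto. Qed.
Lemma Cscal0 a x : 0 <= a -> C x -> C (vscal N a x).
Proof. intros Ha Hx. destruct (Req_dec a 0) as [->|]. rewrite vscal_0. apply C0. apply Cscal; auto; lra. Qed.

Lemma C_closed_ball x : ~ C x -> exists r, 0 < r /\ forall y, vdist N y x < r -> ~ C y.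
Proof. intro H. apply (HCcl x H). Qed.

Definition PD := Dist N C.

Lemma PD_zero x : PD x <= 0 -> C x.
Proof.
  intro H. apply NNPP; intro Hx. destruct (C_closed_ball x Hx) as [r [Hr Hr2]].
  assert (r <= PD x); [|lra]. unfold PD. apply (Dist_ge N C C0). intros c Hc. rewrite vdist_sym.
  destruct (Rlt_or_le (vdist N c x) r); auto. exfalso. apply (Hr2 c); auto.
Qed.

Lemma PD_C c : C c -> PD c <= 0.
Proof. intro Hc. eapply Rle_trans. apply (Dist_le N C C0 c c Hc). rewrite vdist_refl. lra. Qed.

Definition EPprop := forall d alpha eps, 0 < alpha < 1 -> 0 < eps -> exists x', C x' /\
  vdist N x' d <= PD d + eps /\ forall c, C c -> vdist N x' d <= vdist N c d + alpha * vdist N c x'.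

Lemma gap_from_EP : EPprop -> gap_ok N C PD 2.
Proof.
  intro HEP. unfold PD. split; [lra|]. split; [|split; [|split; [|split; [|split; [|split]]]]].
  - apply (Dist_sub N C C0 Cadd).
  - apply (Dist_hom N C C0 Cscal).
  - apply (Dist_nonneg N C C0).
  - intro x. assert (H := Dist_bound N C C0 x). assert (H2 := vnorm_nonneg N x). lra.
  - exact PD_C.
  - exact PD_zero.
  - intros d eta Hd Heta. fold (PD d) in *. set (del := PD d) in *.
    set (alpha := Rmin (1/2) (eta / (2 * del))).
    assert (Hal : 0 < alpha <= 1/2) by (unfold alpha; split; [apply Rmin_case; [lra|apply Rdiv_lt_0_compat; lra]|apply Rmin_l]).
    assert (Hal2 : alpha * (2 * del) <= eta).
    { unfold alpha. assert (Rmin (1/2) (eta / (2 * del)) <= eta / (2*del)) by apply Rmin_r.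
      apply Rmult_le_compat_r with (r := 2 * del) in H; [|lra]. unfold Rdiv in H. rewrite Rmult_assoc, Rinv_l in H; lra. }
    destruct (HEP d alpha del ltac:(lra) Hd) as [x' [Cx' [Hx'1 Hx'2]]].
    set (K := fun k => exists c t, C c /\ k = vadd N c (vscal N t x')).
    assert (K0 : K (vzero N)) by (exists (vzero N), 0; split; [apply C0|vec_eq N (x'::nil)]).
    assert (Kadd : forall a b, K a -> K b -> K (vadd N a b)).
    { intros a b [c [t [Hc ->]]] [c' [t' [Hc' ->]]]. exists (vadd N c c'), (t + t'). split. apply Cadd; auto. vec_eq N (c::c'::x'::nil). }
    assert (Kscal : forall a x, 0 < a -> K x -> K (vscal N a x)).
    { intros a x Ha [c [t [Hc ->]]]. exists (vscal N a c), (a * t). split. apply Cscal; auto. vec_eq N (c::x'::nil). }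
    set (Q := Dist N K).
    set (w := vsub N d x').
    destruct (hahn_banach N Q (Dist_sub N K K0 Kadd) (Dist_hom N K K0 Kscal) w) as [l [Hl1 [Hl2 [Hl3 Hl4]]]].
    assert (QP : forall x, Q x <= Dist N C x).
    { intro x. apply (Dist_ge N C C0). intros c Hc. apply (Dist_le N K K0). exists c, 0. split; auto. vec_eq N (c::x'::nil). }
    assert (lx' : l x' = 0).
    { assert (A1 : l x' <= 0).
      { eapply Rle_trans. apply Hl3. eapply Rle_trans. apply (Dist_le N K K0 x' x'). exists (vzero N), 1. split. apply C0. vec_eq N (x'::nil).
        rewrite vdist_refl; lra. }
      assert (A2 : l (vscal N (-1) x') <= 0).
      { eapply Rle_trans. apply Hl3. eapply Rle_trans. apply (Dist_le N K K0 _ (vscal N (-1) x')). exists (vzero N), (-1). split. apply C0. vec_eq N (x'::nil).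
        rewrite vdist_refl; lra. }
      rewrite Hl2 in A2. lra. }
    assert (key : forall k, K k -> vnorm N w <= vdist N w k + alpha * vnorm N k).
    { intros k [c [t [Hc ->]]]. set (k := vadd N c (vscal N t x')).
      set (s := / (Rabs t + 1)).
      assert (Hs : 0 < s) by (unfold s; apply Rinv_0_lt_compat; assert (0 <= Rabs t) by apply Rabs_pos; lra).
      assert (Hst : 0 < 1 + s * t).
      { unfold s. assert (Habs : - Rabs t <= t) by (unfold Rabs; destruct Rcase_abs; lra).
        assert (0 <= Rabs t) by apply Rabs_pos.
        replace (1 + / (Rabs t + 1) * t) with ((Rabs t + 1 + t) / (Rabs t + 1)) by (field; lra).
        apply Rdiv_lt_0_compat; lra. }
      assert (Hs1 : s <= 1).
      { unfold s. assert (0 <= Rabs t) by apply Rabs_pos. rewrite <- Rinv_1. apply Rinv_le_contravar; lra. }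
      set (pt := vadd N x' (vscal N s k)).
      assert (Cpt : C pt).
      { replace pt with (vadd N (vscal N (1 + s * t) x') (vscal N s c)) by (unfold pt, k; vec_eq N (x'::c::nil)).
        apply Cadd; apply Cscal; auto. }
      specialize (Hx'2 pt Cpt).
      assert (E1 : vdist N x' d = vnorm N w) by (unfold w; apply vdist_sym).
      assert (E2 : vdist N pt x' = s * vnorm N k).
      { unfold vdist, pt. replace (vsub N (vadd N x' (vscal N s k)) x') with (vscal N s k) by vec_eq N (x'::k::nil).
        rewrite vnorm_scal, Rabs_right; lra. }
      assert (E3 : vdist N pt d <= s * vdist N w k + (1 - s) * vnorm N w).
      { unfold vdist, pt.
        replace (vsub N (vadd N x' (vscal N s k)) d) with (vadd N (vscal N s (vsub N k w)) (vscal N (1 - s) (vsub N x' d))) by (unfold w; vec_eq N (x'::k::d::nil)).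
        eapply Rle_trans. apply vnorm_triangle. rewrite !vnorm_scal, !Rabs_right by lra.
        assert (vnorm N (vsub N k w) = vnorm N (vsub N w k)) by apply vdist_sym.
        assert (vnorm N (vsub N x' d) = vnorm N w) by (unfold w; apply vdist_sym). rewrite H, H0. lra. }
      assert (s * vnorm N w <= s * (vdist N w k + alpha * vnorm N k)) by nra.
      apply Rmult_le_reg_l with s; auto. }
    assert (Qw : (1 - alpha) / (1 + alpha) * vnorm N w <= Q w).
    { apply (Dist_ge N K K0). intros k Hk. specialize (key k Hk).
      assert (vnorm N k <= vnorm N w + vdist N w k).
      { replace k with (vadd N w (vsub N k w)) at 1 by vec_eq N (k::w::nil). eapply Rle_trans. apply vnorm_triangle.
        assert (vnorm N (vsub N k w) = vdist N w k) by apply vdist_sym. lra. }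
      assert ((1 - alpha) * vnorm N w <= (1 + alpha) * vdist N w k) by nra.
      unfold Rdiv. rewrite Rmult_comm, <- Rmult_assoc. apply Rdiv_le_l. lra.
      rewrite Rmult_comm. lra. }
    assert (ld : l d = Q w).
    { replace d with (vadd N w x') by (unfold w; vec_eq N (d::x'::nil)). rewrite Hl1, lx', Hl4. ring. }
    assert (Hw : del <= vnorm N w) by (apply (Dist_le N C C0 d x' Cx')).
    assert (E0: vdist N x' d = vnorm N w) by (unfold w; apply vdist_sym).
    assert (Hw2 : vnorm N w <= 2 * del) by (change (PD d) with del in Hx'1; lra).
    exists x', l. split; auto. split. split; auto. split.
    + intro x. eapply Rle_trans. apply Hl3. apply QP.
    + split; auto. split.
      * rewrite ld. assert ((1 - 2 * alpha) * vnorm N w <= (1 - alpha) / (1 + alpha) * vnorm N w).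
        { apply Rmult_le_compat_r. apply vnorm_nonneg.
          assert ((1 - 2*alpha) * (1 + alpha) <= 1 - alpha) by nra.
          unfold Rdiv. apply Rmult_le_reg_r with (1 + alpha). lra. rewrite Rmult_assoc, Rinv_l by lra. lra. }
        assert (alpha * vnorm N w <= alpha * (2 * del)) by (apply Rmult_le_compat_l; lra). nra.
      * exact Hw2.
Qed.

Lemma EP_from_distance_set : is_distance_set N C -> EPprop.
Proof.
  intros HD d alpha eps Ha He. destruct (HD d) as [y [Cy Hy]]. exists y. split; auto. split.
  - rewrite vdist_sym. assert (vdist N d y <= PD d); [|lra]. apply (Dist_ge N C C0). auto.
  - intros c Hc. rewrite (vdist_sym N y d), (vdist_sym N c d). specialize (Hy c Hc).
    assert (0 <= alpha * vdist N c y) by (apply Rmult_le_pos; [lra|apply vdist_nonneg]). lra.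
Qed.

End Cone.

Section Gauge.
Context {E : Type} (N : NormedSpace E) (C : E -> Prop).
Hypothesis HC : is_proper_cone N C.
Hypothesis HCcl : is_closed N C.
Variables (e : E) (r : R).
Hypothesis Hr : 0 < r.
Hypothesis Hball : forall y, vdist N y e < r -> C y.

Let Ce : C e.
Proof. apply Hball. rewrite vdist_refl. auto. Qed.

Definition GA x a := 0 <= a /\ C (vadd N x (vscal N a e)).
Definition G x := Rinf (GA x).

Lemma GA_bound x : GA x (2 * vnorm N x / r).
Proof.
  assert (Hn := vnorm_nonneg N x).
  destruct (Req_dec (vnorm N x) 0) as [H0|H0].
  - apply vnorm_eq0 in H0 as Hx. subst. rewrite vnorm_0. split. lra.
    replace (vadd N (vzero N) (vscal N (2 * 0 / r) e)) with (vzero N) by (vec_eq N (e::nil) by (field; lra)). apply C0; auto.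
  - set (a := 2 * vnorm N x / r). assert (Ha : 0 < a) by (unfold a; apply Rdiv_lt_0_compat; lra).
    split. lra.
    replace (vadd N x (vscal N a e)) with (vscal N a (vadd N e (vscal N (/ a) x))) by (vec_eq N (x::e::nil) by (field; lra)).
    apply Cscal; auto. apply Hball. unfold vdist.
    replace (vsub N (vadd N e (vscal N (/ a) x)) e) with (vscal N (/ a) x) by vec_eq N (x::e::nil).
    rewrite vnorm_scal, Rabs_right by (apply Rle_ge, Rlt_le, Rinv_0_lt_compat; auto).
    unfold a. replace (/ (2 * vnorm N x / r) * vnorm N x) with (r / 2) by (field; lra). lra.
Qed.

Lemma G_glb x : is_glb (GA x) (G x).
Proof. apply Rinf_spec. eexists; apply GA_bound. exists 0. intros a [Ha _]; auto. Qed.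

Lemma GA_up x a a' : GA x a -> a <= a' -> GA x a'.
Proof.
  intros [Ha Hc] Hle. split. lra.
  replace (vadd N x (vscal N a' e)) with (vadd N (vadd N x (vscal N a e)) (vscal N (a' - a) e)) by vec_eq N (x::e::nil).
  apply Cadd; auto. apply Cscal0; auto. lra.
Qed.

Lemma G_nonneg x : 0 <= G x.
Proof. apply (proj2 (G_glb x)). intros a [Ha _]; auto. Qed.

Lemma G_le x a : GA x a -> G x <= a.
Proof. apply (proj1 (G_glb x)). Qed.

Lemma G_att x : GA x (G x).
Proof.
  split. apply G_nonneg. apply NNPP; intro Hn.
  destruct (C_closed_ball N C HCcl _ Hn) as [rho [Hrho Hrho2]].
  destruct (glb_approx _ _ (G_glb x) (rho / (vnorm N e + 1))) as [a [Ha Ha2]].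
  apply Rdiv_lt_0_compat; auto. assert (0 <= vnorm N e) by apply vnorm_nonneg. lra.
  apply (Hrho2 (vadd N x (vscal N a e))). 2: apply Ha.
  assert (G x <= a) by (apply G_le; auto).
  unfold vdist. replace (vsub N (vadd N x (vscal N a e)) (vadd N x (vscal N (G x) e))) with (vscal N (a - G x) e) by vec_eq N (x::e::nil).
  rewrite vnorm_scal, Rabs_right by lra.
  assert (0 <= vnorm N e) by apply vnorm_nonneg.
  assert (a - G x < rho / (vnorm N e + 1)) by lra.
  assert ((a - G x) * vnorm N e <= (a - G x) * (vnorm N e + 1)) by nra.
  assert ((a - G x) * (vnorm N e + 1) < rho).
  { apply Rmult_lt_compat_r with (r := vnorm N e + 1) in H1; [|lra].
    unfold Rdiv in H1. rewrite Rmult_assoc, Rinv_l in H1; lra. }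
  lra.
Qed.

Lemma G_sub x y : G (vadd N x y) <= G x + G y.
Proof.
  apply G_le. destruct (G_att x) as [H1 H2]. destruct (G_att y) as [H3 H4]. split. lra.
  replace (vadd N (vadd N x y) (vscal N (G x + G y) e)) with (vadd N (vadd N x (vscal N (G x) e)) (vadd N y (vscal N (G y) e))) by vec_eq N (x::y::e::nil).
  apply Cadd; auto.
Qed.

Lemma G_hom a x : 0 < a -> G (vscal N a x) = a * G x.
Proof.
  intro Ha. apply Rle_antisym.
  - apply G_le. destruct (G_att x) as [H1 H2]. split. nra.
    replace (vadd N (vscal N a x) (vscal N (a * G x) e)) with (vscal N a (vadd N x (vscal N (G x) e))) by vec_eq N (x::e::nil).
    apply Cscal; auto.
  - assert (G x <= G (vscal N a x) / a).
    { apply G_le. destruct (G_att (vscal N a x)) as [H1 H2]. split. unfold Rdiv. apply Rmult_le_pos; [lra|left; apply Rinv_0_lt_compat; lra].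
      replace (vadd N x (vscal N (G (vscal N a x) / a) e)) with (vscal N (/ a) (vadd N (vscal N a x) (vscal N (G (vscal N a x)) e))) by (vec_eq N (x::e::nil) by (field; lra)).
      apply Cscal; auto. apply Rinv_0_lt_compat; auto. }
    apply Rmult_le_compat_l with (r := a) in H; [|lra].
    replace (a * (G (vscal N a x) / a)) with (G (vscal N a x)) in H by (field; lra). lra.
Qed.

Theorem gap_gauge : gap_ok N C G (2 / r + vnorm N e + 1).
Proof.
  assert (He := vnorm_nonneg N e). assert (Hr2 : 0 < 2 / r) by (apply Rdiv_lt_0_compat; lra).
  split. lra. split; [|split; [|split; [|split; [|split; [|split]]]]].
  - apply G_sub.
  - apply G_hom.
  - apply G_nonneg.
  - intro x. eapply Rle_trans. apply G_le, GA_bound. assert (Hx := vnorm_nonneg N x).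
    replace (2 * vnorm N x / r) with (2 / r * vnorm N x) by (field; lra). nra.
  - intros c Hc. apply G_le. split. lra. replace (vadd N c (vscal N 0 e)) with c by vec_eq N (c::e::nil). auto.
  - intros x Hx. assert (G x = 0) by (assert (H := G_nonneg x); lra). destruct (G_att x) as [_ H1].
    rewrite H in H1. replace (vadd N x (vscal N 0 e)) with x in H1 by vec_eq N (x::e::nil). auto.
  - intros d eta Hd Heta.
    destruct (hahn_banach N G G_sub G_hom d) as [l [Hl1 [Hl2 [Hl3 Hl4]]]].
    set (q := vadd N d (vscal N (G d) e)).
    assert (Cq : C q) by apply (proj2 (G_att d)).
    assert (lq1 : l q <= 0) by (eapply Rle_trans; [apply Hl3|]; apply G_le; split; [lra|]; 
       replace (vadd N q (vscal N 0 e)) with q by vec_eq N (q::e::nil); auto).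
    assert (le1 : l (vscal N (-1) e) <= 1).
    { eapply Rle_trans. apply Hl3. apply G_le. split. lra.
      replace (vadd N (vscal N (-1) e) (vscal N 1 e)) with (vzero N) by vec_eq N (e::nil). apply C0; auto. }
    rewrite Hl2 in le1.
    assert (lq : l q = l d + G d * l e) by (unfold q; rewrite Hl1, Hl2; auto).
    exists q, l. split; auto. split. split; auto. split; auto. split.
    + assert (0 <= G d * (1 + l e)) by (apply Rmult_le_pos; lra). lra.
    + split. lra. unfold q. replace (vsub N d (vadd N d (vscal N (G d) e))) with (vscal N (- G d) e) by vec_eq N (d::e::nil).
      rewrite vnorm_scal, Rabs_Ropp, Rabs_right by lra.
      assert (Hx := vnorm_nonneg N d). nra.
Qed.
End Gauge.

Section Ekeland.
Context {E : Type} (N : NormedSpace E) (C : E -> Prop).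
Hypothesis HC : is_proper_cone N C.
Hypothesis HCcl : is_closed N C.
Hypothesis Hcomp : is_complete N.

Lemma half_pow_small y : 0 < y -> exists M, forall n, (n >= M)%nat -> (1/2)^n < y.
Proof.
  intro Hy. destruct (pow_lt_1_zero (1/2) ltac:(rewrite Rabs_right; lra) y Hy) as [M HM].
  exists M. intros n Hn. specialize (HM n Hn). rewrite Rabs_right in HM; auto. apply Rle_ge, pow_le; lra.
Qed.

Lemma EP_complete : EPprop N C.
Proof.
  intros d alpha eps Ha He.
  set (phi := fun x => vdist N x d).
  set (S := fun x c => C c /\ phi c + alpha * vdist N c x <= phi x).
  assert (Srefl : forall x, C x -> S x x) by (intros x Hx; split; auto; rewrite vdist_refl; lra).
  assert (Strans : forall x y c, S x y -> S y c -> S x c).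
  { intros x y c [Cy H1] [Cc H2]. split; auto. assert (H3 := vdist_tri N c y x). nra. }
  set (infS := fun x => Rinf (fun r => exists c, S x c /\ r = phi c)).
  assert (infS_glb : forall x, C x -> is_glb (fun r => exists c, S x c /\ r = phi c) (infS x)).
  { intros x Hx. apply Rinf_spec. exists (phi x); exists x; split; auto. exists 0. intros r [c [_ ->]]. apply vdist_nonneg. }
  assert (inhE : inhabited E) by exact (inhabits (vzero N)).
  set (next := fun (n : nat) x => epsilon inhE (fun c => S x c /\ phi c < infS x + alpha * (1/2)^n)).
  assert (next_spec : forall n x, C x -> S x (next n x) /\ phi (next n x) < infS x + alpha * (1/2)^n).
  { intros n x Hx. unfold next. apply epsilon_spec.
    destruct (glb_approx _ _ (infS_glb x Hx) (alpha * (1/2)^n)) as [r [[c [Hc ->]] Hr]].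
    apply Rmult_lt_0_compat. lra. apply pow_lt; lra. eauto. }
  destruct (Dist_approx N C (C0 N C HC) d eps He) as [x0 [Cx0 Hx0]].
  set (xs := fix xs (n : nat) := match n with O => x0 | S n => next n (xs n) end).
  assert (Cxs : forall n, C (xs n)).
  { induction n; simpl; auto. apply (proj1 (next_spec n _ IHn)). }
  assert (Sstep : forall n, S (xs n) (xs (Datatypes.S n))) by (intro n; apply (next_spec n _ (Cxs n))).
  assert (Snest : forall n k, S (xs n) (xs (n + k)%nat)).
  { intros n k. induction k. rewrite Nat.add_0_r. apply Srefl; auto.
    rewrite Nat.add_succ_r. eapply Strans; eauto. }
  assert (diam : forall n c, S (xs (Datatypes.S n)) c -> alpha * vdist N c (xs (Datatypes.S n)) <= alpha * (1/2)^n).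
  { intros n c Hc. destruct (next_spec n _ (Cxs n)) as [_ H1]. simpl in H1 |- *.
    assert (infS (xs n) <= phi c) by (apply (proj1 (infS_glb _ (Cxs n))); exists c; split; auto; eapply Strans; eauto).
    destruct Hc as [_ Hc]. fold (xs n) in *. simpl in Hc. lra. }
  assert (diam' : forall n c, S (xs (Datatypes.S n)) c -> vdist N c (xs (Datatypes.S n)) <= (1/2)^n).
  { intros n c Hc. specialize (diam n c Hc). apply Rmult_le_reg_l with alpha; lra. }
  assert (Hcauchy : forall e', 0 < e' -> exists M, forall n m, (M <= n)%nat -> (M <= m)%nat -> vdist N (xs n) (xs m) < e').
  { intros e' He'. destruct (half_pow_small (e'/2) ltac:(lra)) as [M HM].
    exists (Datatypes.S M). intros n m Hn Hm.
    assert (A1 : vdist N (xs n) (xs (Datatypes.S M)) <= (1/2)^M).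
    { apply diam'. replace n with (Datatypes.S M + (n - Datatypes.S M))%nat by lia. apply Snest. }
    assert (A2 : vdist N (xs m) (xs (Datatypes.S M)) <= (1/2)^M).
    { apply diam'. replace m with (Datatypes.S M + (m - Datatypes.S M))%nat by lia. apply Snest. }
    specialize (HM M (le_n M)). assert (H := vdist_tri N (xs n) (xs (Datatypes.S M)) (xs m)).
    rewrite (vdist_sym N (xs (Datatypes.S M)) (xs m)) in H. lra. }
  destruct (Hcomp xs Hcauchy) as [x' Hlim].
  assert (Cx' : C x').
  { apply NNPP; intro Hn. destruct (C_closed_ball N C HCcl x' Hn) as [rho [Hrho Hr2]].
    destruct (Hlim rho Hrho) as [M HM]. apply (Hr2 (xs M)). apply HM; lia. apply Cxs. }
  assert (Sx' : forall n, S (xs n) x').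
  { intro n. split; auto. apply Rnot_lt_le; intro Hlt.
    set (kap := (phi x' + alpha * vdist N x' (xs n) - phi (xs n)) / (2 * (1 + alpha))).
    assert (Hk : 0 < kap) by (unfold kap; apply Rdiv_lt_0_compat; lra).
    destruct (Hlim kap Hk) as [M HM]. set (m := (n + M)%nat). specialize (HM m ltac:(unfold m; lia)).
    destruct (Snest n M) as [_ H1]. fold m in H1.
    assert (H2 : phi x' <= phi (xs m) + vdist N (xs m) x').
    { unfold phi. eapply Rle_trans. apply (vdist_tri N x' (xs m) d). rewrite vdist_sym. lra. }
    assert (H3 : vdist N x' (xs n) <= vdist N x' (xs m) + vdist N (xs m) (xs n)) by apply vdist_tri.
    rewrite (vdist_sym N (xs m) x') in H2.
    assert (alpha * vdist N x' (xs n) <= alpha * vdist N x' (xs m) + alpha * vdist N (xs m) (xs n)) by nra.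
    assert (alpha * vdist N x' (xs m) <= alpha * kap) by (apply Rmult_le_compat_l; [lra|]; rewrite vdist_sym; lra).
    assert (Ek : 2 * kap + 2 * (alpha * kap) = phi x' + alpha * vdist N x' (xs n) - phi (xs n)) by (unfold kap; field; lra).
    assert (Hs : vdist N x' (xs m) = vdist N (xs m) x') by apply vdist_sym.
    lra. }
  exists x'. split; auto. split.
  - destruct (Sx' O) as [_ H]. simpl in H. unfold phi in H. assert (0 <= alpha * vdist N x' x0) by (apply Rmult_le_pos; [lra|apply vdist_nonneg]).
    unfold phi in Hx0. rewrite (vdist_sym N d x0) in Hx0. fold (PD N C d). unfold PD. lra.
  - intros c Hc. apply Rnot_lt_le; intro Hlt.
    assert (Sc : S x' c) by (split; auto; unfold phi; lra).
    assert (Hcx : vdist N c x' = 0).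
    { apply Rle_antisym; [|apply vdist_nonneg]. apply Rnot_lt_le; intro Hpos.
      destruct (half_pow_small (vdist N c x' / 2) ltac:(lra)) as [M HM]. specialize (HM M (le_n M)).
      assert (A1 := diam' M c (Strans _ _ _ (Sx' _) Sc)).
      assert (A2 := diam' M x' (Sx' _)).
      assert (H := vdist_tri N c (xs (Datatypes.S M)) x'). rewrite (vdist_sym N (xs (Datatypes.S M)) x') in H. lra. }
    apply vdist_eq0 in Hcx. subst c. rewrite vdist_refl in Hlt. lra.
Qed.
End Ekeland.

Section Deriv.
Context {E : Type} (N : NormedSpace E).

Definition vcont (D : R -> Prop) (u : R -> E) (t : R) :=
  forall eps, 0 < eps -> exists del, 0 < del /\ forall s, D s -> Rabs (s - t) < del -> vdist N (u s) (u t) < eps.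

Lemma deriv_cont D x t v : has_derivative_within N D x t v -> vcont D x t.
Proof.
  intros Hd eps Heps. destruct (Hd 1 ltac:(lra)) as [d1 [Hd1 Hd2]].
  assert (Hv := vnorm_nonneg N v).
  exists (Rmin d1 (eps / (vnorm N v + 1))). split.
  apply Rmin_case; auto. apply Rdiv_lt_0_compat; lra.
  intros s Ds Hs. destruct (Req_dec s t) as [->|Hne]. rewrite vdist_refl; auto.
  assert (Hs1 : Rabs (s - t) < d1) by (eapply Rlt_le_trans; [exact Hs|apply Rmin_l]).
  assert (Hs2 : Rabs (s - t) < eps / (vnorm N v + 1)) by (eapply Rlt_le_trans; [exact Hs|apply Rmin_r]).
  specialize (Hd2 s Ds Hne Hs1).
  set (q := vscal N (/ (s - t)) (vsub N (x s) (x t))) in *.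
  assert (Hq : vnorm N q <= vnorm N v + 1).
  { assert (H := vnorm_triangle N (vsub N q v) v). replace (vadd N (vsub N q v) v) with q in H by vec_eq N (q::v::nil).
    unfold vdist in Hd2. lra. }
  assert (Hst : s - t <> 0) by lra.
  unfold vdist. replace (vsub N (x s) (x t)) with (vscal N (s - t) q) by (unfold q; vec_eq N (x s :: x t :: nil) by (field; auto)).
  rewrite vnorm_scal.
  assert (Rabs (s - t) * vnorm N q <= Rabs (s - t) * (vnorm N v + 1)) by (apply Rmult_le_compat_l; [apply Rabs_pos|auto]).
  assert (Rabs (s - t) * (vnorm N v + 1) < eps).
  { apply Rmult_lt_compat_r with (r := vnorm N v + 1) in Hs2; [|lra].
    unfold Rdiv in Hs2. rewrite Rmult_assoc, Rinv_l in Hs2; lra. }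
  lra.
Qed.

Lemma vcont_comb D u w t a b : vcont D u t -> vcont D w t ->
  vcont D (fun s => vadd N (vscal N a (u s)) (vscal N b (w s))) t.
Proof.
  intros Hu Hw eps Heps. set (e' := eps / (Rabs a + Rabs b + 1)).
  assert (Ha := Rabs_pos a). assert (Hb := Rabs_pos b).
  assert (He' : 0 < e') by (unfold e'; apply Rdiv_lt_0_compat; lra).
  destruct (Hu e' He') as [d1 [Hd1 H1]]. destruct (Hw e' He') as [d2 [Hd2 H2]].
  exists (Rmin d1 d2). split. apply Rmin_case; auto.
  intros s Ds Hs. specialize (H1 s Ds (Rlt_le_trans _ _ _ Hs (Rmin_l _ _))).
  specialize (H2 s Ds (Rlt_le_trans _ _ _ Hs (Rmin_r _ _))).
  unfold vdist in *.
  replace (vsub N (vadd N (vscal N a (u s)) (vscal N b (w s))) (vadd N (vscal N a (u t)) (vscal N b (w t))))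
    with (vadd N (vscal N a (vsub N (u s) (u t))) (vscal N b (vsub N (w s) (w t)))) by vec_eq N (u s :: u t :: w s :: w t :: nil).
  eapply Rle_lt_trans. apply vnorm_triangle. rewrite !vnorm_scal.
  assert (Rabs a * vnorm N (vsub N (u s) (u t)) <= Rabs a * e') by (apply Rmult_le_compat_l; lra).
  assert (Rabs b * vnorm N (vsub N (w s) (w t)) <= Rabs b * e') by (apply Rmult_le_compat_l; lra).
  assert ((Rabs a + Rabs b) * e' < eps).
  { assert (Ee: e' * (Rabs a + Rabs b + 1) = eps) by (unfold e'; field; lra). nra. }
  lra.
Qed.

Lemma deriv_lin3 D x y z t vx vy vz a b :
  has_derivative_within N D x t vx -> has_derivative_within N D y t vy -> has_derivative_within N D z t vz ->
  has_derivative_within N D (fun s => vsub N (vadd N (vscal N a (x s)) (vscal N b (y s))) (z s)) t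
     (vsub N (vadd N (vscal N a vx) (vscal N b vy)) vz).
Proof.
  intros Hx Hy Hz eps Heps. set (e' := eps / (Rabs a + Rabs b + 2)).
  assert (Ha := Rabs_pos a). assert (Hb := Rabs_pos b).
  assert (He' : 0 < e') by (unfold e'; apply Rdiv_lt_0_compat; lra).
  destruct (Hx e' He') as [d1 [Hd1 H1]]. destruct (Hy e' He') as [d2 [Hd2 H2]]. destruct (Hz e' He') as [d3 [Hd3 H3]].
  exists (Rmin d1 (Rmin d2 d3)). split. repeat apply Rmin_case; auto.
  intros s Ds Hne Hs.
  assert (Hs1 : Rabs (s - t) < d1) by (eapply Rlt_le_trans; [exact Hs|apply Rmin_l]).
  assert (Hs2 : Rabs (s - t) < d2) by (eapply Rlt_le_trans; [exact Hs|]; eapply Rle_trans; [apply Rmin_r|apply Rmin_l]).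
  assert (Hs3 : Rabs (s - t) < d3) by (eapply Rlt_le_trans; [exact Hs|]; eapply Rle_trans; [apply Rmin_r|apply Rmin_r]).
  specialize (H1 s Ds Hne Hs1). specialize (H2 s Ds Hne Hs2). specialize (H3 s Ds Hne Hs3).
  unfold vdist in *.
  set (qx := vsub N (vscal N (/ (s - t)) (vsub N (x s) (x t))) vx) in *.
  set (qy := vsub N (vscal N (/ (s - t)) (vsub N (y s) (y t))) vy) in *.
  set (qz := vsub N (vscal N (/ (s - t)) (vsub N (z s) (z t))) vz) in *.
  replace (vsub N (vscal N (/ (s - t)) (vsub N (vsub N (vadd N (vscal N a (x s)) (vscal N b (y s))) (z s))
                                          (vsub N (vadd N (vscal N a (x t)) (vscal N b (y t))) (z t))))
                  (vsub N (vadd N (vscal N a vx) (vscal N b vy)) vz))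
    with (vsub N (vadd N (vscal N a qx) (vscal N b qy)) qz)
    by (unfold qx, qy, qz; vec_eq N (x s :: x t :: y s :: y t :: z s :: z t :: vx :: vy :: vz :: nil)).
  eapply Rle_lt_trans. apply vnorm_triangle. rewrite vnorm_opp.
  eapply Rle_lt_trans. apply Rplus_le_compat_r. apply vnorm_triangle. rewrite !vnorm_scal.
  assert (Rabs a * vnorm N qx <= Rabs a * e') by (apply Rmult_le_compat_l; lra).
  assert (Rabs b * vnorm N qy <= Rabs b * e') by (apply Rmult_le_compat_l; lra).
  assert ((Rabs a + Rabs b + 1) * e' < eps).
  { assert (Ee: e' * (Rabs a + Rabs b + 2) = eps) by (unfold e'; field; lra). nra. }
  lra.
Qed.

Lemma deriv_left D x sg v : has_derivative_within N D x sg v ->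
  forall eps, 0 < eps -> exists h1, 0 < h1 /\ forall h, 0 < h < h1 -> D (sg - h) ->
    vnorm N (vsub N (vsub N (x sg) (x (sg - h))) (vscal N h v)) <= h * eps.
Proof.
  intros Hd eps Heps. destruct (Hd eps Heps) as [d1 [Hd1 H1]]. exists d1. split; auto.
  intros h Hh Dh. assert (Hne : sg - h <> sg) by lra.
  assert (Habs : Rabs (sg - h - sg) < d1) by (replace (sg - h - sg) with (- h) by ring; rewrite Rabs_Ropp, Rabs_right; lra).
  specialize (H1 _ Dh Hne Habs). unfold vdist in H1.
  replace (sg - h - sg) with (- h) in H1 by ring.
  replace (vsub N (vsub N (x sg) (x (sg - h))) (vscal N h v))
    with (vscal N h (vsub N (vscal N (/ - h) (vsub N (x (sg - h)) (x sg))) v))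
    by (vec_eq N (x sg :: x (sg - h) :: v :: nil) by (field; lra)).
  rewrite vnorm_scal, Rabs_right by lra. apply Rmult_le_compat_l; lra.
Qed.

Lemma seq_compact (L : E) (u w : nat -> E) :
  (forall eps, 0 < eps -> exists M, forall n, (M <= n)%nat -> vdist N (u n) L < eps) ->
  (forall eps, 0 < eps -> exists M, forall n, (M <= n)%nat -> vdist N (w n) L < eps) ->
  is_compact N (fun x => x = L \/ (exists n, x = u n) \/ (exists n, x = w n)).
Proof.
  intros Hu Hw Idx O Hopen Hcov.
  destruct (Hcov L (or_introl eq_refl)) as [i0 Hi0].
  destruct (Hopen i0 L Hi0) as [r [Hr Hball]].
  destruct (Hu r Hr) as [Mu HMu]. destruct (Hw r Hr) as [Mw HMw].
  assert (fin : forall (v : nat -> E), (forall n, exists i, O i (v n)) -> forall M, exists l, forall n, (n < M)%nat -> exists i, In i l /\ O i (v n)).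
  { intros v Hv M. induction M as [|M [l Hl]]. exists nil. intros; lia.
    destruct (Hv M) as [i Hi]. exists (i :: l). intros n Hn. destruct (Nat.eq_dec n M) as [->|].
    exists i; split; auto. left; auto. destruct (Hl n ltac:(lia)) as [j [Hj Hj2]]. exists j; split; auto. right; auto. }
  destruct (fin u (fun n => Hcov (u n) (or_intror (or_introl (ex_intro _ n eq_refl)))) Mu) as [lu Hlu].
  destruct (fin w (fun n => Hcov (w n) (or_intror (or_intror (ex_intro _ n eq_refl)))) Mw) as [lw Hlw].
  exists (i0 :: lu ++ lw). intros x [->|[[n ->]|[n ->]]].
  - exists i0; split; auto. left; auto.
  - destruct (Nat.lt_ge_cases n Mu) as [Hn|Hn].
    + destruct (Hlu n Hn) as [j [Hj Hj2]]. exists j; split; auto. right; apply in_or_app; auto.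
    + exists i0. split. left; auto. apply Hball. apply HMu; auto.
  - destruct (Nat.lt_ge_cases n Mw) as [Hn|Hn].
    + destruct (Hlw n Hn) as [j [Hj Hj2]]. exists j; split; auto. right; apply in_or_app; auto.
    + exists i0. split. left; auto. apply Hball. apply HMw; auto.
Qed.

End Deriv.

Lemma small_inv (del : R) : 0 < del -> exists n : nat, forall m, (n <= m)%nat -> / (INR m + 1) < del.
Proof.
  intro Hd. destruct (INR_unbounded (/ del)) as [n Hn]. exists n. intros m Hm.
  apply le_INR in Hm. assert (0 < / del) by (apply Rinv_0_lt_compat; auto).
  rewrite <- (Rinv_inv del). apply Rinv_lt_contravar. apply Rmult_lt_0_compat; [auto|].
  assert (0 <= INR m) by apply pos_INR. lra. lra.
Qed.

Lemma nat_above (L : R) : exists n : nat, L < INR n.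
Proof. destruct (INR_unbounded L) as [n Hn]. exists n; lra. Qed.

Section Main.
Context {E : Type} (N : NormedSpace E) (C : E -> Prop)
  (HC : is_proper_cone N C)
  (T : option R) (U : E -> Prop) (HUo : is_open N U) (HUc : is_convex_set N U)
  (f : R -> E -> E)
  (Hfl : locally_lipschitz N (in_Ico0 T) U f)
  (Hqm : forall t, in_Ico0 T t -> quasi_monotone_increasing N C U (f t))
  (Hcv : forall t, in_Ico0 T t -> convex_map N C U (f t))
  (t0 : option R) (Ht0T : ext_le t0 T)
  (x1 x2 x3 : R -> E)
  (Hx1U : forall t, in_Ico0 t0 t -> U (x1 t))
  (Hx2U : forall t, in_Ico0 t0 t -> U (x2 t))
  (Hx3U : forall t, in_Ico0 t0 t -> U (x3 t))
  (Hx1 : forall t, in_Ico0 t0 t -> has_derivative_within N (in_Ico0 t0) x1 t (f t (x1 t)))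
  (Hx2 : forall t, in_Ico0 t0 t -> has_derivative_within N (in_Ico0 t0) x2 t (f t (x2 t)))
  (Hx3 : forall t, in_Ico0 t0 t -> has_derivative_within N (in_Ico0 t0) x3 t (f t (x3 t)))
  (lam : R) (Hlam : 0 <= lam <= 1)
  (H0 : x3 0 = vadd N (vscal N lam (x1 0)) (vscal N (1 - lam) (x2 0)))
  (P : E -> R) (M : R) (Hgap : gap_ok N C P M).

Let D := in_Ico0 t0.
Let y s := vadd N (vscal N lam (x1 s)) (vscal N (1 - lam) (x2 s)).
Let d s := vsub N (y s) (x3 s).
Let psi s := P (d s).
Let dd s := vsub N (vadd N (vscal N lam (f s (x1 s))) (vscal N (1 - lam) (f s (x2 s)))) (f s (x3 s)).

Let HM : 0 < M. Proof. apply Hgap. Qed.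
Let Psub : forall x y, P (vadd N x y) <= P x + P y. Proof. apply Hgap. Qed.
Let Pnn : forall x, 0 <= P x. Proof. apply Hgap. Qed.
Let Pbd : forall x, P x <= M * vnorm N x. Proof. apply Hgap. Qed.
Let PC : forall c, C c -> P c <= 0. Proof. apply Hgap. Qed.
Let Pz : forall x, P x <= 0 -> C x. Proof. apply Hgap. Qed.

Definition Spec dv eta q l := C q /\ is_linear_functional N l /\ (forall x, l x <= P x) /\
      l q = 0 /\ P dv - eta <= l dv /\ vnorm N (vsub N dv q) <= M * P dv.

Let Pwit : forall dv eta, 0 < P dv -> 0 < eta -> exists q l, Spec dv eta q l.
Proof. intros dv eta Hd He. destruct Hgap as [_ [_ [_ [_ [_ [_ [_ Hw]]]]]]]. apply Hw; auto. Qed.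

Lemma P_lip x z : Rabs (P x - P z) <= M * vnorm N (vsub N x z).
Proof.
  apply Rabs_le. split.
  - assert (H := Psub x (vsub N z x)). replace (vadd N x (vsub N z x)) with z in H by vec_eq N (x::z::nil).
    assert (H2 := Pbd (vsub N z x)). assert (E1 : vnorm N (vsub N z x) = vnorm N (vsub N x z)) by apply vdist_sym. rewrite E1 in H2. lra.
  - assert (H := Psub z (vsub N x z)). replace (vadd N z (vsub N x z)) with x in H by vec_eq N (x::z::nil).
    assert (H2 := Pbd (vsub N x z)). lra.
Qed.

Lemma P0 : P (vzero N) = 0.
Proof. assert (H := Pbd (vzero N)). rewrite vnorm_0 in H. assert (H2 := Pnn (vzero N)). lra. Qed.

Lemma lin_sub l a b : is_linear_functional N l -> l (vsub N a b) = l a - l b.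
Proof. intros [H1 H2]. unfold vsub. rewrite H1, vopp_scal, H2. ring. Qed.

Lemma lin_bound l : is_linear_functional N l -> (forall x, l x <= P x) -> forall v, Rabs (l v) <= M * vnorm N v.
Proof.
  intros Hl Hle v. apply Rabs_le. split.
  - assert (H := Hle (vopp N v)). rewrite vopp_scal, (proj2 Hl) in H. assert (H2 := Pbd (vscal N (-1) v)).
    rewrite vnorm_scal, Rabs_m1 in H2. lra.
  - eapply Rle_trans. apply Hle. apply Pbd.
Qed.

Lemma DT s : D s -> in_Ico0 T s.
Proof.
  unfold D, in_Ico0. intros [H1 H2]. split; auto. destruct T; auto. destruct t0; simpl in *; [lra|contradiction].
Qed.

Lemma yU s : D s -> U (y s).
Proof. intro Hs. apply HUc; auto. Qed.

Lemma d_deriv s : D s -> has_derivative_within N D d s (dd s).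
Proof. intro Hs. apply deriv_lin3; auto. Qed.

Lemma d_cont s : D s -> vcont N D d s.
Proof. intro Hs. exact (deriv_cont N D d s (dd s) (d_deriv s Hs)). Qed.

Lemma y_cont s : D s -> vcont N D y s.
Proof. intro Hs. apply vcont_comb; [exact (deriv_cont N D x1 s _ (Hx1 s Hs))|exact (deriv_cont N D x2 s _ (Hx2 s Hs))]. Qed.

Lemma psi_cont s : D s -> forall eps, 0 < eps -> exists del, 0 < del /\ forall u, D u -> Rabs (u - s) < del -> Rabs (psi u - psi s) < eps.
Proof.
  intros Hs eps He. destruct (d_cont s Hs (eps / M)) as [del [Hd H]]. apply Rdiv_lt_0_compat; auto.
  exists del. split; auto. intros u Du Hu. specialize (H u Du Hu).
  eapply Rle_lt_trans. apply P_lip. unfold vdist in H.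
  apply Rmult_lt_compat_l with (r := M) in H; auto. replace (M * (eps / M)) with eps in H by (field; lra). lra.
Qed.

Lemma dd_decomp s q l eta : D s -> Spec (d s) eta q l -> U (vadd N (x3 s) q) ->
  l (dd s) <= M * vnorm N (vsub N (f s (y s)) (f s (vadd N (x3 s) q))).
Proof.
  intros Hs [Cq [Hl [Hle [Hlq _]]]] Hz.
  set (z := vadd N (x3 s) q).
  set (comb := vadd N (vscal N lam (f s (x1 s))) (vscal N (1 - lam) (f s (x2 s)))).
  assert (Hdd : dd s = vadd N (vadd N (vsub N comb (f s (y s))) (vsub N (f s (y s)) (f s z))) (vsub N (f s z) (f s (x3 s)))).
  { unfold dd, comb. vec_eq N (f s (x1 s) :: f s (x2 s) :: f s (x3 s) :: f s (y s) :: f s z :: nil). }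
  rewrite Hdd, !(proj1 Hl).
  assert (G1 : l (vsub N comb (f s (y s))) <= 0).
  { eapply Rle_trans. apply Hle. apply PC. destruct (Hcv s (DT s Hs)) as [_ Hc]. apply Hc; auto. }
  assert (G2 : l (vsub N (f s (y s)) (f s z)) <= M * vnorm N (vsub N (f s (y s)) (f s z))).
  { eapply Rle_trans. apply Rle_abs. apply lin_bound; auto. }
  assert (G3 : l (vsub N (f s z) (f s (x3 s))) <= 0).
  { rewrite lin_sub; auto.
    assert (Hdual : in_dual_cone N C (fun v => - l v)).
    { split; [split|split].
      - intros a b. rewrite (proj1 Hl). ring.
      - intros a b. rewrite (proj2 Hl). ring.
      - intros a eps Heps. exists (eps / M). split. apply Rdiv_lt_0_compat; auto.
        intros b Hb. replace (- l b - - l a) with (- l (vsub N b a)) by (rewrite lin_sub; auto; ring).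
        rewrite Rabs_Ropp. eapply Rle_lt_trans. apply lin_bound; auto. unfold vdist in Hb.
        apply Rmult_lt_compat_l with (r := M) in Hb; auto. replace (M * (eps / M)) with eps in Hb by (field; lra). lra.
      - intros c Hc. assert (l c <= 0) by (eapply Rle_trans; [apply Hle|apply PC; auto]). lra. }
    assert (Hcle : cle N C (x3 s) z).
    { unfold cle. replace (vsub N z (x3 s)) with q by (unfold z; vec_eq N (x3 s :: q :: nil)). auto. }
    assert (Heq : - l (x3 s) = - l z) by (unfold z; rewrite (proj1 Hl), Hlq; ring).
    assert (Hq := Hqm s (DT s Hs) (x3 s) z (fun v => - l v) (Hx3U s Hs) Hz Hdual Hcle Heq).
    simpl in Hq. lra. }
  lra.
Qed.

Lemma Dmono t1 u : D t1 -> 0 <= u <= t1 -> D u.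
Proof. unfold D, in_Ico0. intros [H1 H2] Hu. split. lra. destruct t0; auto. lra. Qed.

Lemma local_step a t1 : D t1 -> 0 <= a < t1 -> psi a = 0 ->
  exists del, 0 < del /\ forall u, a <= u < a + del -> u <= t1 -> psi u = 0.
Proof.
  intros Dt1 Ha Hpa.
  assert (Da : D a) by (apply (Dmono t1); auto; lra).
  destruct (HUo (y a) (yU a Da)) as [r0 [Hr0 Hball]].
  destruct (y_cont a Da (r0/2) ltac:(lra)) as [dy [Hdy Hy]].
  destruct (psi_cont a Da (r0/(2*M))) as [dp [Hdp Hp]]. apply Rdiv_lt_0_compat; lra.
  set (d1 := Rmin dy dp).
  assert (Hd1 : 0 < d1) by (unfold d1; apply Rmin_case; auto).
  set (W := fun s => a < s < a + d1 /\ s <= t1).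
  assert (WD : forall s, W s -> D s) by (intros s [H1 H2]; apply (Dmono t1); auto; lra).
  assert (Wy : forall s, W s -> vdist N (y s) (y a) < r0/2).
  { intros s Hs. apply Hy. auto. destruct Hs as [H1 H2]. rewrite Rabs_right by lra.
    assert (d1 <= dy) by apply Rmin_l. lra. }
  assert (Wpsi : forall s, W s -> psi s < r0/(2*M)).
  { intros s Hs. assert (Rabs (psi s - psi a) < r0/(2*M)).
    { apply Hp. auto. destruct Hs as [H1 H2]. rewrite Rabs_right by lra. assert (d1 <= dp) by apply Rmin_r. lra. }
    rewrite Hpa, Rminus_0_r in H. apply Rabs_def2 in H. lra. }
  assert (yz : forall s q, vnorm N (vsub N (y s) (vadd N (x3 s) q)) = vnorm N (vsub N (d s) q)).
  { intros s q. f_equal. unfold d. vec_eq N (y s :: x3 s :: q :: nil). }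
  assert (zU : forall s eta q l, W s -> Spec (d s) eta q l -> U (vadd N (x3 s) q)).
  { intros s eta q l Hs Hsp. apply Hball.
    eapply Rle_lt_trans. apply (vdist_tri N _ (y s)).
    assert (vdist N (vadd N (x3 s) q) (y s) <= M * psi s).
    { rewrite vdist_sym. unfold vdist. rewrite yz. apply Hsp. }
    assert (M * psi s < r0 / 2).
    { specialize (Wpsi s Hs). apply Rmult_lt_compat_l with (r := M) in Wpsi; auto.
      replace (M * (r0 / (2 * M))) with (r0/2) in Wpsi by (field; lra). auto. }
    specialize (Wy s Hs). lra. }
  set (good := fun (n : nat) s => forall eta q l, 0 < eta -> Spec (d s) eta q l ->
     vnorm N (vsub N (f s (y s)) (f s (vadd N (x3 s) q))) <= INR n * vnorm N (vsub N (y s) (vadd N (x3 s) q))).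
  destruct (classic (exists n d2, 0 < d2 /\ forall s, W s -> s < a + d2 -> 0 < psi s -> good n s)) as [[n [d2 [Hd2 Hgood]]]|Hneg].
  -
    set (K := M * M * INR n + 1).
    assert (Hn := pos_INR n).
    assert (HK : 0 < K) by (unfold K; assert (0 <= M * M * INR n) by (apply Rmult_le_pos; nra); lra).
    set (w0 := Rmin (Rmin d1 d2) (Rmin (/ (4 * K)) (t1 - a))).
    assert (Hw0 : 0 < w0).
    { unfold w0. repeat apply Rmin_case; try lra. apply Rinv_0_lt_compat; lra. }
    assert (Hw1 : w0 <= d1) by (unfold w0; eapply Rle_trans; apply Rmin_l).
    assert (Hw2 : w0 <= d2) by (unfold w0; eapply Rle_trans; [apply Rmin_l|apply Rmin_r]).
    assert (Hw3 : w0 <= / (4 * K)) by (unfold w0; eapply Rle_trans; [apply Rmin_r|apply Rmin_l]).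
    assert (Hw4 : w0 <= t1 - a) by (unfold w0; eapply Rle_trans; [apply Rmin_r|apply Rmin_r]).
    set (b := a + w0 / 2).
    assert (Hsmall : 2 * K * (b - a) < 1).
    { unfold b. replace (a + w0/2 - a) with (w0/2) by ring.
      assert (K * w0 <= K * / (4 * K)) by (apply Rmult_le_compat_l; lra).
      replace (K * / (4 * K)) with (1/4) in H by (field; lra). lra. }
    assert (Wb : forall s, a < s <= b -> W s /\ s < a + d2) by (intros s Hs; unfold W, b in *; repeat split; lra).
    assert (Dab : forall s, a <= s <= b -> D s) by (intros s Hs; apply (Dmono t1); auto; unfold b in Hs; lra).
    assert (Hgr := dini_gronwall psi a b K ltac:(unfold b; lra) HK Hsmall).
    exists (w0 / 2). split. lra. intros u Hu Hu2. apply Hgr.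
    + intros s Hs eps Heps. destruct (psi_cont s (Dab s Hs) eps Heps) as [del [Hdel Hdel2]].
      exists del. split; [exact Hdel|]. intros u0 Hu0 Hu1. apply Hdel2; auto.
    + intros; apply Pnn.
    + auto.
    + intros sg Hsg eps Heps. destruct (Rle_or_lt (psi sg) 0) as [Hz|Hpos].
      * exists 1. split. lra. intros h Hh Hh2. assert (psi sg = 0) by (assert (H := Pnn (d sg)); unfold psi in *; lra).
        rewrite H. assert (H2 := Pnn (d (sg - h))). unfold psi in *. nra.
      * destruct (Wb sg Hsg) as [Wsg Hsg2]. assert (Dsg := WD sg Wsg).
        destruct (deriv_left N D d sg (dd sg) (d_deriv sg Dsg) (eps / (3 * M))) as [h1 [Hh1 Hh1']].
        apply Rdiv_lt_0_compat; lra.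
        exists h1. split; auto. intros h Hh Hh2.
        assert (Dsh : D (sg - h)) by (apply (Dmono t1); auto; unfold b in Hsg; lra).
        specialize (Hh1' h Hh Dsh).
        destruct (Pwit (d sg) (h * eps / 3) Hpos) as [q [l Hsp]]. apply Rdiv_lt_0_compat; nra.
        assert (Hg := Hgood sg Wsg Hsg2 Hpos (h * eps / 3) q l ltac:(apply Rdiv_lt_0_compat; nra) Hsp).
        assert (Hdd := dd_decomp sg q l (h * eps / 3) Dsg Hsp (zU sg _ q l Wsg Hsp)).
        destruct Hsp as [Cq [Hl [Hle [Hlq [Hld Hdq]]]]].
        set (R0 := vsub N (vsub N (d sg) (d (sg - h))) (vscal N h (dd sg))) in *.
        assert (Edd : l (d sg) - l (d (sg - h)) = l R0 + h * l (dd sg)).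
        { rewrite <- lin_sub by auto. rewrite <- (proj2 Hl), <- (proj1 Hl). f_equal. unfold R0. vec_eq N (d sg :: d (sg - h) :: dd sg :: nil). }
        assert (HR0 : l R0 <= h * eps / 3).
        { eapply Rle_trans. apply Rle_abs. eapply Rle_trans. apply lin_bound; auto.
          apply Rmult_le_compat_l with (r := M) in Hh1'; [|lra].
          replace (M * (h * (eps / (3 * M)))) with (h * eps / 3) in Hh1' by (field; lra). auto. }
        assert (Hyz := yz sg q).
        assert (Hldd : l (dd sg) <= M * M * INR n * psi sg).
        { eapply Rle_trans. apply Hdd. rewrite Hyz in Hg.
          apply Rmult_le_compat_l with (r := M) in Hg; [|lra].
          apply Rmult_le_compat_l with (r := INR n) in Hdq; [|lra].
          apply Rmult_le_compat_l with (r := M) in Hdq; [|lra]. unfold psi. nra. }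
        assert (Hlsh : l (d (sg - h)) <= psi (sg - h)) by apply Hle.
        assert (h * l (dd sg) <= h * (M * M * INR n * psi sg)) by (apply Rmult_le_compat_l; lra).
        assert (0 <= h * psi sg) by (apply Rmult_le_pos; lra).
        assert (EK : h * (K * psi sg + eps) = h * (M * M * INR n * psi sg) + h * psi sg + h * eps) by (unfold K; ring).
        assert (0 <= h * eps) by nra. unfold psi in *. rewrite EK. lra.
    + unfold b in *. lra.
  -
    assert (Bad : forall n : nat, exists p : R * E, W (fst p) /\ fst p < a + / (INR n + 1) /\ 0 < psi (fst p) /\
       exists eta l, 0 < eta /\ Spec (d (fst p)) eta (snd p) l /\
       INR n * vnorm N (vsub N (y (fst p)) (vadd N (x3 (fst p)) (snd p))) <
       vnorm N (vsub N (f (fst p) (y (fst p))) (f (fst p) (vadd N (x3 (fst p)) (snd p))))).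
    { intro n. apply NNPP; intro Hno. apply Hneg. exists n, (/ (INR n + 1)). split.
      apply Rinv_0_lt_compat. assert (H := pos_INR n). lra.
      intros s Hs Hs2 Hps eta q l Heta Hsp. apply Rnot_lt_le. intro Hlt. apply Hno. exists (s, q). simpl.
      repeat split; auto; try apply Hs. exists eta, l. auto. }
    set (inhp := inhabits (0, vzero N)).
    set (sel := fun n => epsilon inhp (fun p : R * E => W (fst p) /\ fst p < a + / (INR n + 1) /\ 0 < psi (fst p) /\
       exists eta l, 0 < eta /\ Spec (d (fst p)) eta (snd p) l /\
       INR n * vnorm N (vsub N (y (fst p)) (vadd N (x3 (fst p)) (snd p))) <
       vnorm N (vsub N (f (fst p) (y (fst p))) (f (fst p) (vadd N (x3 (fst p)) (snd p)))))).
    assert (Hsel : forall n, let p := sel n in W (fst p) /\ fst p < a + / (INR n + 1) /\ 0 < psi (fst p) /\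
       exists eta l, 0 < eta /\ Spec (d (fst p)) eta (snd p) l /\
       INR n * vnorm N (vsub N (y (fst p)) (vadd N (x3 (fst p)) (snd p))) <
       vnorm N (vsub N (f (fst p) (y (fst p))) (f (fst p) (vadd N (x3 (fst p)) (snd p))))).
    { intro n. unfold sel. apply epsilon_spec. apply Bad. }
    set (sg := fun n => fst (sel n)).
    set (Ys := fun n => y (sg n)).
    set (Zs := fun n => vadd N (x3 (sg n)) (snd (sel n))).
    assert (sg_close : forall del, 0 < del -> exists n0, forall m, (n0 <= m)%nat -> Rabs (sg m - a) < del /\ W (sg m)).
    { intros del Hdel. destruct (small_inv del Hdel) as [n0 Hn0]. exists n0. intros m Hm.
      destruct (Hsel m) as [Hw [Hlt _]]. fold (sg m) in Hw, Hlt. specialize (Hn0 m Hm).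
      split; auto. destruct Hw as [H1 H2]. rewrite Rabs_right by lra. lra. }
    assert (Yconv : forall eps, 0 < eps -> exists M0, forall n, (M0 <= n)%nat -> vdist N (Ys n) (y a) < eps).
    { intros eps Heps. destruct (y_cont a Da eps Heps) as [del [Hdel Hdel2]].
      destruct (sg_close del Hdel) as [n0 Hn0]. exists n0. intros m Hm. destruct (Hn0 m Hm) as [H1 H2].
      apply Hdel2; auto. }
    assert (ZY : forall n, vdist N (Zs n) (Ys n) <= M * psi (sg n)).
    { intro n. destruct (Hsel n) as [_ [_ [_ [eta [l [_ [Hsp _]]]]]]]. rewrite vdist_sym. unfold vdist, Ys, Zs.
      fold (sg n) in Hsp |- *. rewrite yz. apply Hsp. }
    assert (Zconv : forall eps, 0 < eps -> exists M0, forall n, (M0 <= n)%nat -> vdist N (Zs n) (y a) < eps).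
    { intros eps Heps. destruct (Yconv (eps/2) ltac:(lra)) as [n0 Hn0].
      destruct (psi_cont a Da (eps / (2 * M))) as [del [Hdel Hdel2]]. apply Rdiv_lt_0_compat; lra.
      destruct (sg_close del Hdel) as [n1 Hn1]. exists (Nat.max n0 n1). intros m Hm.
      destruct (Hn1 m ltac:(lia)) as [H1 H2]. specialize (Hdel2 (sg m) (WD _ H2) H1).
      rewrite Hpa, Rminus_0_r in Hdel2. apply Rabs_def2 in Hdel2.
      specialize (Hn0 m ltac:(lia)).
      eapply Rle_lt_trans. apply (vdist_tri N _ (Ys m)).
      assert (M * psi (sg m) < eps / 2).
      { destruct Hdel2 as [Hd _]. apply Rmult_lt_compat_l with (r := M) in Hd; auto.
        replace (M * (eps / (2 * M))) with (eps/2) in Hd by (field; lra). auto. }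
      specialize (ZY m). lra. }
    set (Kset := fun x => x = y a \/ (exists n, x = Ys n) \/ (exists n, x = Zs n)).
    assert (Kc : is_compact N Kset) by (apply seq_compact; auto).
    assert (KU : forall x, Kset x -> U x).
    { intros x [->|[[n ->]|[n ->]]].
      - apply yU; auto.
      - destruct (Hsel n) as [Hw _]. fold (sg n) in Hw. apply Hball. unfold Ys. specialize (Wy _ Hw). lra.
      - destruct (Hsel n) as [Hw [_ [_ [eta [l [_ [Hsp _]]]]]]]. fold (sg n) in Hw, Hsp. unfold Zs. fold (sg n).
        apply (zU _ _ _ _ Hw Hsp). }
    destruct (Hfl Kset Kc KU t1 (DT t1 Dt1)) as [L HL].
    destruct (nat_above L) as [n Hn].
    destruct (Hsel n) as [Hw [_ [_ [eta [l [_ [Hsp Hbad]]]]]]]. fold (sg n) in Hw, Hsp, Hbad.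
    fold (Ys n) in Hbad. fold (Zs n) in Hbad.
    assert (Hne : Ys n <> Zs n).
    { intro Heq. rewrite Heq in Hbad. replace (vsub N (Zs n) (Zs n)) with (vzero N) in Hbad by vec_eq N (Zs n :: nil).
      replace (vsub N (f (sg n) (Zs n)) (f (sg n) (Zs n))) with (vzero N) in Hbad by vec_eq N (f (sg n) (Zs n) :: nil).
      rewrite vnorm_0 in Hbad. lra. }
    assert (Hsg : 0 <= sg n <= t1) by (destruct Hw as [H1 H2]; lra).
    specialize (HL (sg n) (Ys n) (Zs n) Hsg (or_intror (or_introl (ex_intro _ n eq_refl)))
                    (or_intror (or_intror (ex_intro _ n eq_refl))) Hne).
    assert (Hpos : 0 < vnorm N (vsub N (Zs n) (Ys n))).
    { assert (H := vnorm_nonneg N (vsub N (Zs n) (Ys n))). destruct H as [H|H]; auto.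
      exfalso. apply Hne. symmetry. apply (vdist_eq0 N). unfold vdist. lra. }
    apply Rmult_le_compat_r with (r := vnorm N (vsub N (Zs n) (Ys n))) in HL; [|lra].
    unfold Rdiv in HL. rewrite Rmult_assoc, Rinv_l in HL by lra. rewrite Rmult_1_r in HL.
    assert (E1 : vnorm N (vsub N (Zs n) (Ys n)) = vnorm N (vsub N (Ys n) (Zs n))) by apply vdist_sym.
    assert (E2 : vnorm N (vsub N (f (sg n) (Zs n)) (f (sg n) (Ys n))) = vnorm N (vsub N (f (sg n) (Ys n)) (f (sg n) (Zs n)))) by apply vdist_sym.
    unfold Ys in *. rewrite E1, E2 in HL. rewrite E1 in Hpos.
    assert (L * vnorm N (vsub N (y (sg n)) (Zs n)) < INR n * vnorm N (vsub N (y (sg n)) (Zs n))) by (apply Rmult_lt_compat_r; lra).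
    lra.
Qed.

Theorem main_gap : forall t, D t -> cle N C (x3 t) (vadd N (vscal N lam (x1 t)) (vscal N (1 - lam) (x2 t))).
Proof.
  intros t1 Dt1.
  assert (Ht1 : 0 <= t1) by apply Dt1.
  assert (All : forall u, 0 <= u <= t1 -> psi u = 0).
  { apply real_ind; auto.
    - unfold psi, d, y. rewrite H0. replace (vsub N _ _) with (vzero N) by vec_eq N (x1 0 :: x2 0 :: nil). apply P0.
    - intros s Hs Hall. destruct (local_step s t1 Dt1 Hs (Hall s ltac:(lra))) as [del [Hdel H]].
      exists del. split; auto.
    - intros s Hs Hall. apply NNPP; intro Hne.
      assert (Hp : 0 < psi s) by (assert (H := Pnn (d s)); unfold psi in *; destruct H; auto; congruence).
      destruct (psi_cont s (Dmono t1 s Dt1 ltac:(lra)) (psi s) Hp) as [del [Hdel H]].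
      set (u := s - Rmin del s / 2).
      assert (Hm : 0 < Rmin del s) by (apply Rmin_case; lra).
      assert (Hm2 : Rmin del s <= del) by apply Rmin_l. assert (Hm3 : Rmin del s <= s) by apply Rmin_r.
      assert (Hu : 0 <= u < s) by (unfold u; lra).
      specialize (H u (Dmono t1 u Dt1 ltac:(lra))). rewrite Hall in H by lra.
      assert (Rabs (u - s) < del) by (unfold u; rewrite Rabs_left by lra; lra).
      specialize (H H1). rewrite Rminus_0_l, Rabs_Ropp, Rabs_right in H by lra. lra. }
  apply Pz. specialize (All t1 ltac:(lra)). unfold psi, d, y in All. rewrite All. lra.
Qed.

End Main.

Theorem mainTheorem7 (E : Type) (N : NormedSpace E) (C : E -> Prop)
  (HC : is_proper_cone N C) (HCcl : is_closed N C)
  (Halt : has_nonempty_interior N C \/ is_complete N \/ is_distance_set N C)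
  (T : option R) (HT : ext_pos T)
  (U : E -> Prop) (HUo : is_open N U) (HUc : is_convex_set N U)
  (f : R -> E -> E)
  (Hfc : continuous_on_IxU N (in_Ico0 T) U f)
  (Hfl : locally_lipschitz N (in_Ico0 T) U f)
  (Hqm : forall t, in_Ico0 T t -> quasi_monotone_increasing N C U (f t))
  (Hcv : forall t, in_Ico0 T t -> convex_map N C U (f t))
  (t0 : option R) (Ht0 : ext_pos t0) (Ht0T : ext_le t0 T)
  (x1 x2 x3 : R -> E)
  (Hx1U : forall t, in_Ico0 t0 t -> U (x1 t))
  (Hx2U : forall t, in_Ico0 t0 t -> U (x2 t))
  (Hx3U : forall t, in_Ico0 t0 t -> U (x3 t))
  (Hx1 : forall t, in_Ico0 t0 t -> has_derivative_within N (in_Ico0 t0) x1 t (f t (x1 t)))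
  (Hx2 : forall t, in_Ico0 t0 t -> has_derivative_within N (in_Ico0 t0) x2 t (f t (x2 t)))
  (Hx3 : forall t, in_Ico0 t0 t -> has_derivative_within N (in_Ico0 t0) x3 t (f t (x3 t)))
  (lam : R) (Hlam : 0 <= lam <= 1)
  (H0 : x3 0 = vadd N (vscal N lam (x1 0)) (vscal N (1 - lam) (x2 0))) :
  forall t, in_Ico0 t0 t ->
    cle N C (x3 t) (vadd N (vscal N lam (x1 t)) (vscal N (1 - lam) (x2 t))).

Proof.
  assert (Hgap : exists P M, gap_ok N C P M).
  { destruct Halt as [[e [r [Hr Hb]]]|[Hcomp|Hds]].
    - eexists; eexists. apply (gap_gauge N C HC HCcl e r Hr Hb).
    - eexists; eexists. apply (gap_from_EP N C HC HCcl (EP_complete N C HC HCcl Hcomp)).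
    - eexists; eexists. apply (gap_from_EP N C HC HCcl (EP_from_distance_set N C HC Hds)). }
  destruct Hgap as [P [M Hg]].
  exact (main_gap N C T U HUo HUc f Hfl Hqm Hcv t0 Ht0T x1 x2 x3 Hx1U Hx2U Hx3U Hx1 Hx2 Hx3 lam Hlam H0 P M Hg).
Qed.
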